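(* Let $\mathcal{H}_A,\mathcal{H}_B$ be finite-dimensional Hilbert spaces, let $|\Psi\rangle,|\Phi\rangle\in\mathcal{H}_A\otimes\mathcal{H}_B$ be unit vectors (not necessarily orthogonal), and let $\alpha,\beta\in\mathbb{C}$ with $|\alpha|^2+|\beta|^2=1$ such that $|\Gamma\rangle=\alpha|\Psi\rangle+\beta|\Phi\rangle\neq0$. Then for every $t\in(0,1)$, $$\big\|\,|\Gamma\rangle\big\|^2\,E(\Gamma)\le f(t),\qquad f(t)=\frac{t|\beta|^2+(1-t)|\alpha|^2}{t(1-t)}\Big[tE(\Psi)+(1-t)E(\Phi)+h_2(t)\Big].$$
   Context: $S(\rho)=-\mathrm{Tr}(\rho\log\rho)$ is the von Neumann entropy (logarithm base 2). For a nonzero vector $|\chi\rangle\in\mathcal{H}_A\otimes\mathcal{H}_B$, its entanglement is $E(\chi)=S\big(\mathrm{Tr}_B|\chi\rangle\langle\chi|/\langle\chi|\chi\rangle\big)$, i.e. the entropy of entanglement of the normalized vector. $h_2(x)=-x\log x-(1-x)\log(1-x)$ is the binary entropy function. *)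

(* Defs.v *)
From Stdlib Require Import Reals ClassicalEpsilon.
Open Scope R_scope.

Record Cpx := mkC { Re : R; Im : R }.
Definition C0 : Cpx := mkC 0 0.
Definition RtoC (x : R) : Cpx := mkC x 0.
Definition Cadd (z w : Cpx) : Cpx := mkC (Re z + Re w) (Im z + Im w).
Definition Cmul (z w : Cpx) : Cpx :=
  mkC (Re z * Re w - Im z * Im w) (Re z * Im w + Im z * Re w).
Definition Cconj (z : Cpx) : Cpx := mkC (Re z) (- Im z).
Definition Cnorm2 (z : Cpx) : R := Re z * Re z + Im z * Im z.

Fixpoint sumR (n : nat) (f : nat -> R) : R :=
  match n with O => 0 | S k => sumR k f + f k end.
Fixpoint sumC (n : nat) (f : nat -> Cpx) : Cpx :=
  match n with O => C0 | S k => Cadd (sumC k f) (f k) end.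

(* ---------- vectors of H_A ⊗ H_B, H_A = Cpx^dA, H_B = Cpx^dB ----------
   A vector is given by its coefficients v i j in the product basis
   |i>⊗|j>, i < dA, j < dB (values at other indices are irrelevant). *)
Definition bivec := nat -> nat -> Cpx.

Definition norm2 (dA dB : nat) (v : bivec) : R :=
  sumR dA (fun i => sumR dB (fun j => Cnorm2 (v i j))).

Definition ptraceB (dA dB : nat) (v : bivec) : nat -> nat -> Cpx :=
  fun i k => sumC dB (fun j => Cmul (v i j) (Cconj (v k j))).

Definition log2 (x : R) : R := ln x / ln 2.
Definition xlog2x (x : R) : R := if Rle_dec x 0 then 0 else x * log2 x.

Definition unitary (n : nat) (U : nat -> nat -> Cpx) : Prop :=
  forall i j, (i < n)%nat -> (j < n)%nat ->
    sumC n (fun k => Cmul (Cconj (U k i)) (U k j)) =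
    (if Nat.eqb i j then RtoC 1 else C0).

Definition is_spectrum (n : nat) (rho : nat -> nat -> Cpx) (lam : nat -> R) : Prop :=
  exists U, unitary n U /\
    forall i k, (i < n)%nat -> (k < n)%nat ->
      rho i k = sumC n (fun l => Cmul (Cmul (U i l) (RtoC (lam l))) (Cconj (U k l))).

(* a chosen spectrum of rho (well defined as a multiset for Hermitian rho) *)
Definition spectrum (n : nat) (rho : nat -> nat -> Cpx) : nat -> R :=
  epsilon (inhabits (fun _ : nat => 0)) (fun lam => is_spectrum n rho lam).

Definition vN_entropy (n : nat) (rho : nat -> nat -> Cpx) : R :=
  - sumR n (fun l => xlog2x (spectrum n rho l)).

Definition entanglement (dA dB : nat) (v : bivec) : R :=
  vN_entropy dA (fun i k =>
    Cmul (ptraceB dA dB v i k) (RtoC (/ norm2 dA dB v))).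

Definition h2 (x : R) : R := - xlog2x x - xlog2x (1 - x).

Definition superpos (a b : Cpx) (Psi Phi : bivec) : bivec :=
  fun i j => Cadd (Cmul a (Psi i j)) (Cmul b (Phi i j)).

(* Main.v *)
Require Import Defs.
From Stdlib Require Import Reals Lra Lia Psatz FunctionalExtensionality ClassicalEpsilon Ring Field.
Open Scope R_scope.

Lemma Cext z w : Re z = Re w -> Im z = Im w -> z = w.
Proof. destruct z, w; simpl; intros; subst; reflexivity. Qed.

Definition Copp z := mkC (- Re z) (- Im z).
Definition Csub z w := Cadd z (Copp w).
Definition Cone := mkC 1 0.

Lemma Cring_th : ring_theory C0 Cone Cadd Cmul Csub Copp (@eq Cpx).
Proof. constructor; intros; apply Cext; simpl; ring. Qed.
Add Ring Cring : Cring_th.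

Ltac Csimpl := apply Cext; simpl.

Lemma RtoC1 : RtoC 1 = Cone. Proof. reflexivity. Qed.
Lemma RtoC0 : RtoC 0 = C0. Proof. reflexivity. Qed.
Lemma RtoC_add a b : RtoC (a + b) = Cadd (RtoC a) (RtoC b).
Proof. Csimpl; ring. Qed.
Lemma RtoC_mul a b : RtoC (a * b) = Cmul (RtoC a) (RtoC b).
Proof. Csimpl; ring. Qed.
Lemma RtoC_opp a : RtoC (- a) = Copp (RtoC a).
Proof. Csimpl; ring. Qed.
Lemma RtoC_inj a b : RtoC a = RtoC b -> a = b.
Proof. intros H. apply (f_equal Re) in H. exact H. Qed.

Lemma Cconj_add z w : Cconj (Cadd z w) = Cadd (Cconj z) (Cconj w).
Proof. Csimpl; ring. Qed.
Lemma Cconj_mul z w : Cconj (Cmul z w) = Cmul (Cconj z) (Cconj w).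
Proof. Csimpl; ring. Qed.
Lemma Cconj_opp z : Cconj (Copp z) = Copp (Cconj z).
Proof. Csimpl; ring. Qed.
Lemma Cconj_sub z w : Cconj (Csub z w) = Csub (Cconj z) (Cconj w).
Proof. Csimpl; ring. Qed.
Lemma Cconj_conj z : Cconj (Cconj z) = z.
Proof. Csimpl; ring. Qed.
Lemma Cconj_RtoC a : Cconj (RtoC a) = RtoC a.
Proof. Csimpl; ring. Qed.
Lemma Cconj_C0 : Cconj C0 = C0.
Proof. Csimpl; ring. Qed.
Lemma Cconj_C1 : Cconj Cone = Cone.
Proof. Csimpl; ring. Qed.

Lemma Cnorm2_nonneg z : 0 <= Cnorm2 z.
Proof. unfold Cnorm2; nra. Qed.
Lemma Cnorm2_mul z w : Cnorm2 (Cmul z w) = Cnorm2 z * Cnorm2 w.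
Proof. unfold Cnorm2; simpl; ring. Qed.
Lemma Cnorm2_conj z : Cnorm2 (Cconj z) = Cnorm2 z.
Proof. unfold Cnorm2; simpl; ring. Qed.
Lemma Cnorm2_RtoC a : Cnorm2 (RtoC a) = a * a.
Proof. unfold Cnorm2; simpl; ring. Qed.
Lemma Cmul_conj_l z : Cmul (Cconj z) z = RtoC (Cnorm2 z).
Proof. Csimpl; unfold Cnorm2; ring. Qed.
Lemma Cmul_conj_r z : Cmul z (Cconj z) = RtoC (Cnorm2 z).
Proof. Csimpl; unfold Cnorm2; ring. Qed.
Lemma Cnorm2_zero z : Cnorm2 z = 0 -> z = C0.
Proof. unfold Cnorm2; intros H; Csimpl; nra. Qed.
Lemma Cnorm2_pos z : z <> C0 -> 0 < Cnorm2 z.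
Proof. intros H. destruct (Cnorm2_nonneg z) as [h|h]; auto.
  exfalso; apply H, Cnorm2_zero; auto. Qed.
Lemma Re_sq_le z : Re z * Re z <= Cnorm2 z.
Proof. unfold Cnorm2; nra. Qed.
Lemma Cnorm2_add_le z w : Cnorm2 (Cadd z w) <= 2 * Cnorm2 z + 2 * Cnorm2 w.
Proof. unfold Cnorm2; simpl.
  pose proof (Rle_0_sqr (Re z - Re w)); pose proof (Rle_0_sqr (Im z - Im w)); unfold Rsqr in *; nra. Qed.
Lemma Cnorm2_opp z : Cnorm2 (Copp z) = Cnorm2 z.
Proof. unfold Cnorm2; simpl; ring. Qed.
Lemma Im_conj_mul z : Im (Cmul (Cconj z) z) = 0.
Proof. simpl; ring. Qed.

Lemma sumC_ext n f g : (forall i, (i < n)%nat -> f i = g i) -> sumC n f = sumC n g.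
Proof. induction n; simpl; intros H; auto. rewrite IHn, H; auto; intros; apply H; lia. Qed.
Lemma sumR_ext n f g : (forall i, (i < n)%nat -> f i = g i) -> sumR n f = sumR n g.
Proof. induction n; simpl; intros H; auto. rewrite IHn, H; auto; intros; apply H; lia. Qed.

Lemma sumC_add n f g : sumC n (fun i => Cadd (f i) (g i)) = Cadd (sumC n f) (sumC n g).
Proof. induction n; simpl. Csimpl; ring. rewrite IHn; ring. Qed.
Lemma sumR_add n f g : sumR n (fun i => f i + g i) = sumR n f + sumR n g.
Proof. induction n; simpl. ring. rewrite IHn; ring. Qed.
Lemma sumC_scal_l n c f : sumC n (fun i => Cmul c (f i)) = Cmul c (sumC n f).
Proof. induction n; simpl. Csimpl; ring. rewrite IHn; ring. Qed.
Lemma sumC_scal_r n c f : sumC n (fun i => Cmul (f i) c) = Cmul (sumC n f) c.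
Proof. induction n; simpl. Csimpl; ring. rewrite IHn; ring. Qed.
Lemma sumR_scal_l n c f : sumR n (fun i => c * f i) = c * sumR n f.
Proof. induction n; simpl. ring. rewrite IHn; ring. Qed.
Lemma sumR_scal_r n c f : sumR n (fun i => f i * c) = sumR n f * c.
Proof. induction n; simpl. ring. rewrite IHn; ring. Qed.
Lemma sumC_zero n : sumC n (fun _ => C0) = C0.
Proof. induction n; simpl; auto. rewrite IHn; Csimpl; ring. Qed.
Lemma sumR_zero n : sumR n (fun _ => 0) = 0.
Proof. induction n; simpl; auto. rewrite IHn; ring. Qed.
Lemma sumC_zero' n f : (forall i, (i<n)%nat -> f i = C0) -> sumC n f = C0.
Proof. intros H; rewrite (sumC_ext n f (fun _ => C0)); auto; apply sumC_zero. Qed.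
Lemma sumR_zero' n f : (forall i, (i<n)%nat -> f i = 0) -> sumR n f = 0.
Proof. intros H; rewrite (sumR_ext n f (fun _ => 0)); auto; apply sumR_zero. Qed.
Lemma sumC_opp n f : sumC n (fun i => Copp (f i)) = Copp (sumC n f).
Proof. induction n; simpl. Csimpl; ring. rewrite IHn; ring. Qed.
Lemma sumC_sub n f g : sumC n (fun i => Csub (f i) (g i)) = Csub (sumC n f) (sumC n g).
Proof. induction n; simpl. Csimpl; ring. rewrite IHn; ring. Qed.
Lemma sumR_opp n f : sumR n (fun i => - f i) = - sumR n f.
Proof. induction n; simpl. ring. rewrite IHn; ring. Qed.
Lemma sumR_minus n f g : sumR n (fun i => f i - g i) = sumR n f - sumR n g.
Proof. induction n; simpl. ring. rewrite IHn; ring. Qed.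

Lemma sumC_swap n m f :
  sumC n (fun i => sumC m (fun j => f i j)) = sumC m (fun j => sumC n (fun i => f i j)).
Proof.
  induction n; simpl. rewrite sumC_zero; auto.
  rewrite IHn, <- sumC_add; auto.
Qed.
Lemma sumR_swap n m f :
  sumR n (fun i => sumR m (fun j => f i j)) = sumR m (fun j => sumR n (fun i => f i j)).
Proof.
  induction n; simpl. rewrite sumR_zero; auto.
  rewrite IHn, <- sumR_add; auto.
Qed.

Lemma sumC_first n f : sumC (S n) f = Cadd (f 0%nat) (sumC n (fun i => f (S i))).
Proof. induction n. simpl; Csimpl; ring.
  change (sumC (S (S n)) f) with (Cadd (sumC (S n) f) (f (S n))). rewrite IHn. simpl; ring. Qed.
Lemma sumR_first n f : sumR (S n) f = f 0%nat + sumR n (fun i => f (S i)).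
Proof. induction n. simpl; ring.
  change (sumR (S (S n)) f) with (sumR (S n) f + f (S n)). rewrite IHn. simpl; ring. Qed.
Lemma sumC_plus a b f : sumC (a + b) f = Cadd (sumC a f) (sumC b (fun i => f (a + i)%nat)).
Proof. induction b. simpl. rewrite Nat.add_0_r; Csimpl; ring.
  rewrite Nat.add_succ_r; simpl; rewrite IHb; ring. Qed.
Lemma sumR_plus a b f : sumR (a + b) f = sumR a f + sumR b (fun i => f (a + i)%nat).
Proof. induction b. simpl. rewrite Nat.add_0_r; ring.
  rewrite Nat.add_succ_r; simpl; rewrite IHb; ring. Qed.

Lemma sumC_delta n j f : (j < n)%nat ->
  sumC n (fun i => if Nat.eqb i j then f i else C0) = f j.
Proof.
  induction n; intros H; [lia|]. simpl.
  destruct (Nat.eq_dec j n).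
  - subst. rewrite Nat.eqb_refl. rewrite sumC_zero'. Csimpl; ring.
    intros i Hi. destruct (Nat.eqb_spec i n); [lia|auto].
  - rewrite IHn by lia. destruct (Nat.eqb_spec n j); [lia|]. Csimpl; ring.
Qed.
Lemma sumR_delta n j f : (j < n)%nat ->
  sumR n (fun i => if Nat.eqb i j then f i else 0) = f j.
Proof.
  induction n; intros H; [lia|]. simpl.
  destruct (Nat.eq_dec j n).
  - subst. rewrite Nat.eqb_refl. rewrite sumR_zero'. ring.
    intros i Hi. destruct (Nat.eqb_spec i n); [lia|auto].
  - rewrite IHn by lia. destruct (Nat.eqb_spec n j); [lia|]. ring.
Qed.

Lemma Re_sumC n f : Re (sumC n f) = sumR n (fun i => Re (f i)).
Proof. induction n; simpl; auto. rewrite IHn; auto. Qed.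
Lemma Im_sumC n f : Im (sumC n f) = sumR n (fun i => Im (f i)).
Proof. induction n; simpl; auto. rewrite IHn; auto. Qed.
Lemma sumC_conj n f : Cconj (sumC n f) = sumC n (fun i => Cconj (f i)).
Proof. induction n; simpl. Csimpl; ring. rewrite <- IHn, Cconj_add; auto. Qed.
Lemma sumC_RtoC n f : sumC n (fun i => RtoC (f i)) = RtoC (sumR n f).
Proof. induction n; simpl; auto. rewrite IHn, RtoC_add; auto. Qed.

Lemma sumR_le n f g : (forall i, (i < n)%nat -> f i <= g i) -> sumR n f <= sumR n g.
Proof. induction n; simpl; intros H. lra. pose proof (H n ltac:(lia)).
  assert (sumR n f <= sumR n g) by (apply IHn; intros; apply H; lia). lra. Qed.
Lemma sumR_nonneg n f : (forall i, (i < n)%nat -> 0 <= f i) -> 0 <= sumR n f.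
Proof. intros H. rewrite <- (sumR_zero n). apply sumR_le; auto. Qed.
Lemma sumR_term_le n f j : (forall i, (i < n)%nat -> 0 <= f i) -> (j < n)%nat -> f j <= sumR n f.
Proof.
  induction n; intros H Hj; [lia|]. simpl.
  assert (0 <= sumR n f) by (apply sumR_nonneg; intros; apply H; lia).
  destruct (Nat.eq_dec j n). subst; lra.
  assert (f j <= sumR n f) by (apply IHn; [intros; apply H; lia| lia]).
  pose proof (H n ltac:(lia)); lra.
Qed.
Lemma sumR_pos n f j : (forall i, (i < n)%nat -> 0 <= f i) -> (j < n)%nat -> 0 < f j -> 0 < sumR n f.
Proof. intros H Hj Hp. pose proof (sumR_term_le n f j H Hj). lra. Qed.
Lemma sumR_zero_inv n f j : (forall i, (i < n)%nat -> 0 <= f i) -> sumR n f = 0 -> (j < n)%nat -> f j = 0.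
Proof. intros H Hs Hj. pose proof (sumR_term_le n f j H Hj). pose proof (H j Hj). lra. Qed.

Lemma Cnorm2_sum_le n f :
  Cnorm2 (sumC n f) <= 2 ^ n * sumR n (fun i => Cnorm2 (f i)).
Proof.
  induction n; simpl. unfold Cnorm2; simpl; lra.
  pose proof (Cnorm2_add_le (sumC n f) (f n)).
  assert (1 <= 2 ^ n) by (apply pow_R1_Rle; lra).
  pose proof (Cnorm2_nonneg (f n)).
  assert (0 <= sumR n (fun i => Cnorm2 (f i))) by (apply sumR_nonneg; intros; apply Cnorm2_nonneg).
  nra.
Qed.

Definition ip n (u v : nat -> Cpx) := sumC n (fun i => Cmul (Cconj (u i)) (v i)).
Definition nrm n (v : nat -> Cpx) := sumR n (fun i => Cnorm2 (v i)).
Definition col (U : nat -> nat -> Cpx) l := fun i => U i l.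

Lemma sumC_mul n m f g :
  Cmul (sumC n f) (sumC m g) = sumC n (fun i => sumC m (fun j => Cmul (f i) (g j))).
Proof. rewrite <- sumC_scal_r. apply sumC_ext; intros. rewrite <- sumC_scal_l; auto. Qed.

Lemma nrm_nonneg n v : 0 <= nrm n v.
Proof. apply sumR_nonneg; intros; apply Cnorm2_nonneg. Qed.
Lemma ip_self n v : ip n v v = RtoC (nrm n v).
Proof. unfold ip, nrm. rewrite <- sumC_RtoC. apply sumC_ext; intros; apply Cmul_conj_l. Qed.
Lemma ip_conj n u v : Cconj (ip n u v) = ip n v u.
Proof. unfold ip. rewrite sumC_conj. apply sumC_ext; intros.
  rewrite Cconj_mul, Cconj_conj; ring. Qed.
Lemma ip_scal_r n u c v : ip n u (fun i => Cmul c (v i)) = Cmul c (ip n u v).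
Proof. unfold ip. rewrite <- sumC_scal_l. apply sumC_ext; intros; ring. Qed.
Lemma ip_scal_l n u c v : ip n (fun i => Cmul c (u i)) v = Cmul (Cconj c) (ip n u v).
Proof. unfold ip. rewrite <- sumC_scal_l. apply sumC_ext; intros; rewrite Cconj_mul; ring. Qed.
Lemma ip_sub_r n u v w : ip n u (fun i => Csub (v i) (w i)) = Csub (ip n u v) (ip n u w).
Proof. unfold ip. rewrite <- sumC_sub. apply sumC_ext; intros; ring. Qed.
Lemma ip_sub_l n u v w : ip n (fun i => Csub (u i) (v i)) w = Csub (ip n u w) (ip n v w).
Proof. unfold ip. rewrite <- sumC_sub. apply sumC_ext; intros; rewrite Cconj_sub; ring. Qed.
Lemma ip_ext n u u' v v' : (forall i, (i<n)%nat -> u i = u' i) -> (forall i, (i<n)%nat -> v i = v' i) ->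
  ip n u v = ip n u' v'.
Proof. intros H1 H2; unfold ip; apply sumC_ext; intros; rewrite H1, H2; auto. Qed.
Lemma nrm_ext n u u' : (forall i, (i<n)%nat -> u i = u' i) -> nrm n u = nrm n u'.
Proof. intros H1; unfold nrm; apply sumR_ext; intros; rewrite H1; auto. Qed.
Lemma nrm_Re n v : nrm n v = Re (ip n v v).
Proof. rewrite ip_self; reflexivity. Qed.

Definition bcoef n (v x : nat -> Cpx) :=
  if Rle_dec (nrm n v) 0 then 0 else Cnorm2 (ip n v x) / nrm n v.

Lemma bcoef_nonneg n v x : 0 <= bcoef n v x.
Proof. unfold bcoef. destruct Rle_dec. lra.
  apply Rmult_le_pos. apply Cnorm2_nonneg. left; apply Rinv_0_lt_compat; lra. Qed.

Lemma bessel n A (v : nat -> nat -> Cpx) :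
  (forall a b, (a < A)%nat -> (b < A)%nat -> a <> b -> ip n (v a) (v b) = C0) ->
  forall x, sumR A (fun a => bcoef n (v a) x) <= nrm n x.
Proof.
  induction A; intros Horth x. simpl; apply nrm_nonneg.
  simpl.
  assert (IH : forall y, sumR A (fun a => bcoef n (v a) y) <= nrm n y)
    by (apply IHA; intros; apply Horth; lia).
  unfold bcoef at 2. destruct (Rle_dec (nrm n (v A)) 0) as [Hle|Hgt].
  - specialize (IH x); lra.
  - set (N := nrm n (v A)). set (z := ip n (v A) x).
    set (c := Cmul z (RtoC (/ N))).
    set (x' := fun i => Csub (x i) (Cmul c (v A i))).
    assert (E1 : sumR A (fun a => bcoef n (v a) x') = sumR A (fun a => bcoef n (v a) x)).
    { apply sumR_ext; intros a Ha. unfold bcoef. destruct Rle_dec; auto.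
      unfold x'. rewrite ip_sub_r, ip_scal_r. rewrite Horth by lia.
      replace (Csub (ip n (v a) x) (Cmul c C0)) with (ip n (v a) x) by ring. auto. }
    assert (E2 : nrm n x' = nrm n x - Cnorm2 z / N).
    { rewrite !nrm_Re. unfold x'. rewrite ip_sub_l, !ip_sub_r, !ip_scal_l, !ip_scal_r.
      rewrite !ip_self. fold N. rewrite <- (ip_conj n (v A) x). fold z.
      unfold c. simpl. unfold Cnorm2. assert (N <> 0) by (unfold N in *; apply Rnot_le_lt in Hgt; intro; lra). field; auto. }
    specialize (IH x'). rewrite E1, E2 in IH. lra.
Qed.

Definition cunitary n (U : nat -> nat -> Cpx) := forall i j, (i < n)%nat -> (j < n)%nat ->
  sumC n (fun k => Cmul (U i k) (Cconj (U j k))) = if Nat.eqb i j then RtoC 1 else C0.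

Lemma parseval n U x : cunitary n U ->
  sumR n (fun l => Cnorm2 (ip n (col U l) x)) = nrm n x.
Proof.
  intros HU. apply RtoC_inj. rewrite <- sumC_RtoC.
  rewrite (sumC_ext n _ (fun l => Cmul (ip n x (col U l)) (ip n (col U l) x))).
  2:{ intros l Hl. rewrite <- Cmul_conj_l, ip_conj; auto. }
  unfold ip. 
  rewrite (sumC_ext n _ (fun l => sumC n (fun j => sumC n (fun j' =>
     Cmul (Cmul (Cconj (x j)) (x j')) (Cmul (col U l j) (Cconj (col U l j'))))))).
  2:{ intros l Hl. rewrite sumC_mul. apply sumC_ext; intros; apply sumC_ext; intros.
      unfold col; ring. }
  rewrite sumC_swap.
  rewrite (sumC_ext n _ (fun j => Cmul (Cconj (x j)) (x j))).
  - apply ip_self.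
  - intros j Hj. rewrite sumC_swap.
    rewrite (sumC_ext n _ (fun j' => if Nat.eqb j' j then Cmul (Cconj (x j)) (x j') else C0)).
    + rewrite sumC_delta; auto.
    + intros j' Hj'. rewrite sumC_scal_l. unfold col. rewrite HU by auto.
      destruct (Nat.eqb_spec j j'), (Nat.eqb_spec j' j); subst; try lia; Csimpl; ring.
Qed.

Definition bil n (M : nat -> nat -> Cpx) (e f : nat -> Cpx) :=
  sumC n (fun j => sumC n (fun j' => Cmul (Cconj (e j)) (Cmul (M j j') (f j')))).
Definition specform n (M U : nat -> nat -> Cpx) (lam : nat -> R) :=
  forall i k, (i < n)%nat -> (k < n)%nat ->
    M i k = sumC n (fun l => Cmul (Cmul (U i l) (RtoC (lam l))) (Cconj (U k l))).

Lemma bil_sum n K M (h g : nat -> nat -> Cpx) c e f :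
  (forall j j', (j < n)%nat -> (j' < n)%nat ->
     M j j' = sumC K (fun k => Cmul (Cmul (h k j) (c k)) (Cconj (g k j')))) ->
  bil n M e f = sumC K (fun k => Cmul (Cmul (ip n e (h k)) (c k)) (ip n (g k) f)).
Proof.
  intros HM. unfold bil.
  rewrite (sumC_ext n _ (fun j => sumC K (fun k => sumC n (fun j' =>
     Cmul (Cmul (Cmul (Cconj (e j)) (h k j)) (c k)) (Cmul (Cconj (g k j')) (f j')))))).
  2:{ intros j Hj. rewrite <- sumC_swap. apply sumC_ext; intros j' Hj'.
      rewrite HM by auto. rewrite <- sumC_scal_r, <- sumC_scal_l. apply sumC_ext; intros; ring. }
  rewrite sumC_swap. apply sumC_ext; intros k Hk.
  unfold ip. rewrite <- sumC_scal_r, sumC_mul. apply sumC_ext; intros; apply sumC_ext; intros; ring.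
Qed.

Lemma bil_gram n K M (h : nat -> nat -> Cpx) e f :
  (forall j j', (j < n)%nat -> (j' < n)%nat ->
     M j j' = sumC K (fun k => Cmul (h k j) (Cconj (h k j')))) ->
  bil n M e f = sumC K (fun k => Cmul (ip n e (h k)) (ip n (h k) f)).
Proof.
  intros HM. rewrite (bil_sum n K M h h (fun _ => Cone)).
  apply sumC_ext; intros; ring.
  intros; rewrite HM by auto; apply sumC_ext; intros; ring.
Qed.

Lemma bil_spec n M U lam a b : unitary n U -> specform n M U lam -> (a < n)%nat -> (b < n)%nat ->
  bil n M (col U a) (col U b) = if Nat.eqb a b then RtoC (lam a) else C0.
Proof.
  intros HU HM Ha Hb. rewrite (bil_sum n n M (fun l => col U l) (fun l => col U l) (fun l => RtoC (lam l))).
  2:{ intros; rewrite HM by auto; apply sumC_ext; intros; unfold col; ring. }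
  rewrite (sumC_ext n _ (fun l => if Nat.eqb l a then (if Nat.eqb a b then RtoC (lam a) else C0) else C0)).
  - apply sumC_delta; auto.
  - intros l Hl. unfold ip. pose proof (HU a l Ha Hl) as E1. pose proof (HU l b Hl Hb) as E2.
    unfold col. rewrite E1, E2.
    destruct (Nat.eqb_spec a l), (Nat.eqb_spec l a), (Nat.eqb_spec l b), (Nat.eqb_spec a b);
      subst; try lia; Csimpl; ring.
Qed.

Lemma bil_gram_diag n K M (h : nat -> nat -> Cpx) e :
  (forall j j', (j < n)%nat -> (j' < n)%nat ->
     M j j' = sumC K (fun k => Cmul (h k j) (Cconj (h k j')))) ->
  bil n M e e = RtoC (sumR K (fun k => Cnorm2 (ip n e (h k)))).
Proof.
  intros HM. rewrite (bil_gram n K M h) by auto. rewrite <- sumC_RtoC.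
  apply sumC_ext; intros. rewrite <- (ip_conj n e (h i)). rewrite Cmul_conj_r; auto.
Qed.

Definition herm n (M : nat -> nat -> Cpx) := forall i k, (i < n)%nat -> (k < n)%nat -> M k i = Cconj (M i k).
Definition mv n (M : nat -> nat -> Cpx) (v : nat -> Cpx) := fun i => sumC n (fun k => Cmul (M i k) (v k)).
Definition ext (x : Cpx) (w : nat -> Cpx) := fun i => match i with O => x | S i' => w i' end.

Lemma ext_eta (v : nat -> Cpx) : v = ext (v 0%nat) (fun i => v (S i)).
Proof. apply functional_extensionality; intros [|i]; reflexivity. Qed.

Lemma bil_ip_mv n M e f : bil n M e f = ip n e (mv n M f).
Proof. unfold bil, ip, mv. apply sumC_ext; intros. rewrite <- sumC_scal_l; auto. Qed.

Lemma bil_ext n M e e' f f' : (forall i, (i<n)%nat -> e i = e' i) -> (forall i, (i<n)%nat -> f i = f' i) ->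
  bil n M e f = bil n M e' f'.
Proof. intros H1 H2; unfold bil; apply sumC_ext; intros; apply sumC_ext; intros; rewrite H1, H2; auto. Qed.

Lemma bil_herm n M e f : herm n M -> Cconj (bil n M e f) = bil n M f e.
Proof.
  intros H. unfold bil. rewrite sumC_conj. rewrite sumC_swap. apply sumC_ext; intros.
  rewrite sumC_conj. apply sumC_ext; intros. rewrite (H i i0) by auto.
  rewrite !Cconj_mul, Cconj_conj. ring.
Qed.

Lemma bil_zero n M : bil n M (fun _ => C0) (fun _ => C0) = C0.
Proof. unfold bil. apply sumC_zero'; intros; apply sumC_zero'; intros. Csimpl; ring. Qed.

Lemma nrm_zero_inv n v : nrm n v = 0 -> forall i, (i<n)%nat -> v i = C0.
Proof. intros H i Hi. apply Cnorm2_zero. apply (sumR_zero_inv n (fun i => Cnorm2 (v i))); auto.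
  intros; apply Cnorm2_nonneg. Qed.

Lemma bil_nrm0 n M v : nrm n v = 0 -> bil n M v v = C0.
Proof. intros H. rewrite (bil_ext n M v (fun _ => C0) v (fun _ => C0)). apply bil_zero.
  all: apply nrm_zero_inv; auto. Qed.

Lemma herm_real n M i : herm n M -> (i < n)%nat -> M i i = RtoC (Re (M i i)).
Proof. intros H Hi. pose proof (H i i Hi Hi) as E. apply (f_equal Im) in E. simpl in E.
  Csimpl; lra. Qed.

Section Split.
Variable n : nat.
Variable N : nat -> nat -> Cpx.
Definition beta (w : nat -> Cpx) := sumC n (fun k => Cmul (N 0%nat (S k)) (w k)).
Definition Nblk := fun i k => N (S i) (S k).

Lemma bil_split x w : herm (S n) N ->
  bil (S n) N (ext x w) (ext x w) =
  Cadd (Cadd (Cmul (Cconj x) (Cmul (N 0%nat 0%nat) x))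
             (Cadd (Cmul (Cconj x) (beta w)) (Cmul (Cconj (beta w)) x)))
       (bil n Nblk w w).
Proof.
  intros H. unfold bil at 1. rewrite sumC_first. cbn [ext].
  rewrite (sumC_first n (fun j' => Cmul (Cconj x) (Cmul (N 0%nat j') (ext x w j')))). cbn [ext].
  rewrite (sumC_ext n (fun i => sumC (S n) (fun j' => Cmul (Cconj (w i)) (Cmul (N (S i) j') (ext x w j')))) (fun i => Cadd (Cmul (Cconj (w i)) (Cmul (N (S i) 0%nat) x))
     (sumC n (fun j => Cmul (Cconj (w i)) (Cmul (N (S i) (S j)) (w j)))))).
  2:{ intros; rewrite sumC_first; auto. }
  rewrite sumC_add.
  assert (E1 : sumC n (fun i => Cmul (Cconj (w i)) (Cmul (N (S i) 0%nat) x)) = Cmul (Cconj (beta w)) x).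
  { unfold beta. rewrite sumC_conj, <- sumC_scal_r. apply sumC_ext; intros.
    rewrite (H 0%nat (S i)) by lia. rewrite Cconj_mul; ring. }
  assert (E2 : sumC n (fun i => Cmul (Cconj x) (Cmul (N 0%nat (S i)) (w i))) = Cmul (Cconj x) (beta w)).
  { unfold beta. rewrite <- sumC_scal_l. auto. }
  rewrite E1, E2. unfold bil, Nblk. ring.
Qed.

Lemma nrm_ext_split x w : nrm (S n) (ext x w) = Cnorm2 x + nrm n w.
Proof. unfold nrm. rewrite sumR_first. reflexivity. Qed.

Lemma mv_split0 x w : mv (S n) N (ext x w) 0%nat = Cadd (Cmul (N 0%nat 0%nat) x) (beta w).
Proof. unfold mv. rewrite sumC_first. reflexivity. Qed.
Lemma mv_splitS x w i : mv (S n) N (ext x w) (S i) =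
   Cadd (Cmul (N (S i) 0%nat) x) (sumC n (fun k => Cmul (N (S i) (S k)) (w k))).
Proof. unfold mv. rewrite sumC_first. reflexivity. Qed.
End Split.

Definition Schur (N : nat -> nat -> Cpx) (a : R) := fun i k =>
  Csub (N (S i) (S k)) (Cmul (Cmul (N (S i) 0%nat) (N 0%nat (S k))) (RtoC (/ a))).

Lemma bil_schur n N a w : herm (S n) N ->
  bil n (Schur N a) w w = Csub (bil n (Nblk N) w w)
     (Cmul (Cmul (Cconj (beta n N w)) (beta n N w)) (RtoC (/ a))).
Proof.
  intros H. unfold bil, Schur, Nblk.
  rewrite (sumC_ext n _ (fun i => Csub (sumC n (fun j => Cmul (Cconj (w i)) (Cmul (N (S i) (S j)) (w j))))
      (sumC n (fun j => Cmul (Cmul (Cmul (Cconj (w i)) (N (S i) 0%nat)) (RtoC (/a))) (Cmul (N 0%nat (S j)) (w j)))))).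
  2:{ intros; rewrite <- sumC_sub; apply sumC_ext; intros; ring. }
  rewrite sumC_sub. f_equal.
  rewrite (sumC_ext n _ (fun i => Cmul (Cmul (Cmul (Cconj (w i)) (N (S i) 0%nat)) (RtoC (/a))) (beta n N w))).
  2:{ intros; unfold beta; rewrite sumC_scal_l; auto. }
  rewrite sumC_scal_r, sumC_scal_r.
  assert (E : sumC n (fun i => Cmul (Cconj (w i)) (N (S i) 0%nat)) = Cconj (beta n N w)).
  { unfold beta. rewrite sumC_conj. apply sumC_ext; intros. rewrite (H 0%nat (S i)) by lia.
    rewrite Cconj_mul; ring. }
  rewrite E; ring.
Qed.

Lemma schur_identity n N x w : herm (S n) N -> 0 < Re (N 0%nat 0%nat) ->
  Re (bil (S n) N (ext x w) (ext x w)) =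
  Re (N 0%nat 0%nat) * Cnorm2 (Cadd x (Cmul (beta n N w) (RtoC (/ Re (N 0%nat 0%nat)))))
  + Re (bil n (Schur N (Re (N 0%nat 0%nat))) w w).
Proof.
  intros H Ha. rewrite bil_split by auto. rewrite bil_schur by auto.
  pose proof (herm_real (S n) N 0%nat H ltac:(lia)) as HN.
  set (a := Re (N 0%nat 0%nat)) in *. rewrite HN. clearbody a.
  set (b := beta n N w). set (B := bil n (Nblk N) w w).
  unfold Cnorm2. simpl. field. lra.
Qed.

Lemma herm_schur n N : herm (S n) N -> herm n (Schur N (Re (N 0%nat 0%nat))).
Proof.
  intros H i k Hi Hk. unfold Schur. rewrite Cconj_sub, !Cconj_mul, Cconj_RtoC.
  rewrite (H (S i) (S k)) by lia. rewrite (H 0%nat (S k)) by lia. rewrite (H (S i) 0%nat) by lia.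
  ring.
Qed.

Lemma Re_bil_scal_bound n M v :
  Re (bil n M v v) <= sumR n (fun j => sumR n (fun j' => (Cnorm2 (M j j') + 1) / 2)) * nrm n v.
Proof.
  unfold bil. rewrite Re_sumC. rewrite <- sumR_scal_r. apply sumR_le; intros j Hj.
  rewrite Re_sumC. rewrite <- sumR_scal_r. apply sumR_le; intros j' Hj'.
  set (a := v j). set (b := v j'). set (m := M j j').
  assert (HA : Cnorm2 a <= nrm n v) by (apply (sumR_term_le n (fun i => Cnorm2 (v i))); auto; intros; apply Cnorm2_nonneg).
  assert (HB : Cnorm2 b <= nrm n v) by (apply (sumR_term_le n (fun i => Cnorm2 (v i))); auto; intros; apply Cnorm2_nonneg).
  set (X := Re (Cmul (Cconj a) (Cmul m b))).
  assert (HX : X * X <= Cnorm2 a * Cnorm2 m * Cnorm2 b).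
  { pose proof (Re_sq_le (Cmul (Cconj a) (Cmul m b))). rewrite !Cnorm2_mul, Cnorm2_conj in H. fold X in H. lra. }
  pose proof (Cnorm2_nonneg a). pose proof (Cnorm2_nonneg b). pose proof (Cnorm2_nonneg m).
  set (A := Cnorm2 a) in *. set (B := Cnorm2 b) in *. set (Mm := Cnorm2 m) in *.
  clearbody X A B Mm a b m.
  assert (HY : X <= (Mm + 1) * (A + B) / 4).
  { assert (0 <= (Mm + 1) * (A + B) / 4) by nra.
    assert (Mm * A * B * 16 <= ((Mm + 1) * (A + B)) * ((Mm + 1) * (A + B))).
    { assert (4 * Mm <= (Mm+1)*(Mm+1)) by (pose proof (Rle_0_sqr (Mm - 1)); unfold Rsqr in *; nra).
      assert (4 * (A * B) <= (A+B)*(A+B)) by (pose proof (Rle_0_sqr (A - B)); unfold Rsqr in *; nra).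
      assert (0 <= A * B) by nra. nra. }
    nra. }
  nra.
Qed.

Definition ek (k : nat) := fun i => if Nat.eqb i k then Cone else C0.

Lemma beta_zero n N : beta n N (fun _ => C0) = C0.
Proof. unfold beta. apply sumC_zero'; intros; Csimpl; ring. Qed.

Lemma sum_ek n k f : (k < n)%nat -> sumC n (fun j => Cmul (f j) (ek k j)) = f k.
Proof. intros H. rewrite <- (sumC_delta n k f H). apply sumC_ext; intros. unfold ek.
  destruct (Nat.eqb i k); Csimpl; ring. Qed.

Lemma bil_ek n M k : (k < n)%nat -> bil n M (ek k) (ek k) = M k k.
Proof.
  intros H. unfold bil.
  rewrite (sumC_ext n _ (fun j => Cmul (Cconj (ek k j)) (M j k))).
  2:{ intros j Hj. rewrite <- (sum_ek n k (fun j' => Cmul (Cconj (ek k j)) (M j j'))) by auto.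
      apply sumC_ext; intros; ring. }
  rewrite <- (sum_ek n k (fun j => M j k)) by auto. apply sumC_ext; intros. unfold ek.
  destruct (Nat.eqb i k); Csimpl; ring.
Qed.

Lemma nrm_ek n k : (k < n)%nat -> nrm n (ek k) = 1.
Proof. intros H. rewrite <- (sumR_delta n k (fun _ => 1) H). apply sumR_ext; intros.
  unfold ek. destruct (Nat.eqb i k); unfold Cnorm2; simpl; ring. Qed.

Lemma mv_schur n N a w i :
  mv n (Schur N a) w i = Csub (sumC n (fun k => Cmul (N (S i) (S k)) (w k)))
                              (Cmul (Cmul (N (S i) 0%nat) (beta n N w)) (RtoC (/ a))).
Proof. unfold mv, Schur, beta. rewrite <- sumC_scal_l, <- sumC_scal_r, <- sumC_sub.
  apply sumC_ext; intros; ring. Qed.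

Lemma beta_bound n N w :
  Cnorm2 (beta n N w) <= 2 ^ n * sumR n (fun k => Cnorm2 (N 0%nat (S k))) * nrm n w.
Proof.
  unfold beta. eapply Rle_trans. apply Cnorm2_sum_le. rewrite Rmult_assoc.
  apply Rmult_le_compat_l. apply pow_le; lra.
  rewrite <- sumR_scal_r. apply sumR_le; intros. rewrite Cnorm2_mul.
  apply Rmult_le_compat_l. apply Cnorm2_nonneg.
  apply (sumR_term_le n (fun i => Cnorm2 (w i))); auto. intros; apply Cnorm2_nonneg.
Qed.

Lemma KL n : forall N, herm n N -> (forall v, 0 <= Re (bil n N v v)) ->
  (exists c, 0 < c /\ forall v, c * nrm n v <= Re (bil n N v v)) \/
  (exists v, 0 < nrm n v /\ forall i, (i < n)%nat -> mv n N v i = C0).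
Proof.
  induction n; intros N HN Hpsd.
  - left. exists 1. split; [lra|]. intros v. unfold nrm, bil; simpl. lra.
  - pose proof (herm_real (S n) N 0%nat HN ltac:(lia)) as HN0.
    assert (Ha0 : 0 <= Re (N 0%nat 0%nat)).
    { pose proof (Hpsd (ext Cone (fun _ => C0))) as H.
      rewrite bil_split, beta_zero, bil_zero in H by auto. simpl in H. lra. }
    destruct (Rle_lt_dec (Re (N 0%nat 0%nat)) 0) as [Ha|Ha].
    + assert (Hb : forall k, (k < n)%nat -> N 0%nat (S k) = C0).
      { intros k Hk. apply Cnorm2_zero.
        destruct (Rle_lt_dec (Cnorm2 (N 0%nat (S k))) 0) as [h|h].
        { pose proof (Cnorm2_nonneg (N 0%nat (S k))); lra. }
        exfalso. set (b := N 0%nat (S k)) in *.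
        set (T := (Rabs (Re (N (S k) (S k))) + 1) / (2 * Cnorm2 b)).
        pose proof (Hpsd (ext (Cmul (RtoC (- T)) b) (ek k))) as H.
        rewrite bil_split in H by auto.
        assert (Eb : beta n N (ek k) = b).
        { unfold beta. apply (sum_ek n k (fun j => N 0%nat (S j))); auto. }
        rewrite Eb, bil_ek in H by auto. unfold Nblk in H. rewrite HN0 in H.
        assert (Re (N 0%nat 0%nat) = 0) by lra. rewrite H0 in H.
        assert (HT : T * (2 * Cnorm2 b) = Rabs (Re (N (S k) (S k))) + 1).
        { unfold T. field. lra. }
        pose proof (Rle_abs (Re (N (S k) (S k)))).
        simpl in H. unfold Cnorm2 in *. clearbody T b. nra. }
      right. exists (ext Cone (fun _ => C0)). split.
      * rewrite nrm_ext_split. unfold nrm. rewrite sumR_zero'. unfold Cnorm2; simpl; lra.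
        intros; unfold Cnorm2; simpl; ring.
      * intros [|i] Hi.
        -- rewrite mv_split0, beta_zero, HN0. assert (Re (N 0%nat 0%nat) = 0) by lra.
           rewrite H. Csimpl; ring.
        -- rewrite mv_splitS. rewrite sumC_zero'. rewrite (HN 0%nat (S i)) by lia.
           rewrite Hb by lia. Csimpl; ring. intros; Csimpl; ring.
    + set (a := Re (N 0%nat 0%nat)) in *.
      assert (HS : herm n (Schur N a)) by (apply herm_schur; auto).
      assert (HSp : forall w, 0 <= Re (bil n (Schur N a) w w)).
      { intros w. pose proof (Hpsd (ext (Copp (Cmul (beta n N w) (RtoC (/ a)))) w)) as H.
        rewrite schur_identity in H by auto. fold a in H.
        replace (Cadd (Copp (Cmul (beta n N w) (RtoC (/ a)))) (Cmul (beta n N w) (RtoC (/ a)))) with C0 in H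
          by ring.
        unfold Cnorm2 in H; simpl in H. lra. }
      destruct (IHn (Schur N a) HS HSp) as [[c [Hc Hcv]] | [w [Hw Hwk]]].
      * left. set (Bb := sumR n (fun k => Cnorm2 (N 0%nat (S k)))).
        assert (HBb : 0 <= Bb) by (apply sumR_nonneg; intros; apply Cnorm2_nonneg).
        assert (H2n : 0 < 2 ^ n) by (apply pow_lt; lra).
        set (K := 1 + 2 * (2 ^ n * Bb) / (a * a)).
        assert (HK : 1 <= K).
        { unfold K. assert (0 <= 2 * (2 ^ n * Bb) / (a * a)).
          { apply Rmult_le_pos. nra. left; apply Rinv_0_lt_compat; nra. } lra. }
        exists (Rmin (a / 2) (c / K)). split.
        { apply Rmin_pos. lra. apply Rdiv_lt_0_compat; lra. }
        intros v. rewrite (ext_eta v). set (x := v 0%nat). set (w := fun i => v (S i)).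
        rewrite schur_identity by auto. fold a. rewrite nrm_ext_split.
        set (y := Cadd x (Cmul (beta n N w) (RtoC (/ a)))).
        pose proof (Hcv w) as Hw.
        assert (Hx : Cnorm2 x <= 2 * Cnorm2 y + 2 * (Cnorm2 (beta n N w) / (a * a))).
        { replace x with (Cadd y (Copp (Cmul (beta n N w) (RtoC (/ a))))) by (unfold y; ring).
          eapply Rle_trans. apply Cnorm2_add_le. rewrite Cnorm2_opp, Cnorm2_mul, Cnorm2_RtoC.
          right. field. lra. }
        pose proof (beta_bound n N w) as Hb. fold Bb in Hb.
        assert (Hb2 : Cnorm2 (beta n N w) / (a * a) <= (2 ^ n * Bb) * nrm n w / (a * a)).
        { apply Rmult_le_compat_r. left; apply Rinv_0_lt_compat; nra. lra. }
        assert (Hnv : Cnorm2 x + nrm n w <= 2 * Cnorm2 y + K * nrm n w).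
        { unfold K. replace ((1 + 2 * (2 ^ n * Bb) / (a * a)) * nrm n w) with
            (nrm n w + 2 * ((2 ^ n * Bb) * nrm n w / (a * a))) by (field; lra). lra. }
        pose proof (Rmin_l (a / 2) (c / K)). pose proof (Rmin_r (a / 2) (c / K)).
        assert (0 < Rmin (a / 2) (c / K)) by (apply Rmin_pos; [lra| apply Rdiv_lt_0_compat; lra]).
        set (c' := Rmin (a / 2) (c / K)) in *.
        assert (c' * K <= c).
        { assert (c' * K <= c / K * K) by (apply Rmult_le_compat_r; lra).
          replace (c / K * K) with c in H2 by (field; lra). lra. }
        pose proof (nrm_nonneg n w). pose proof (Cnorm2_nonneg y).
        clearbody c' K Bb y. nra.
      * right. exists (ext (Copp (Cmul (beta n N w) (RtoC (/ a)))) w). split.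
        { rewrite nrm_ext_split. pose proof (Cnorm2_nonneg (Copp (Cmul (beta n N w) (RtoC (/ a))))). lra. }
        intros [|i] Hi.
        -- rewrite mv_split0, HN0. fold a. Csimpl; field; lra.
        -- rewrite mv_splitS. pose proof (Hwk i ltac:(lia)) as E. rewrite mv_schur in E.
           assert (E' : sumC n (fun k => Cmul (N (S i) (S k)) (w k)) =
                        Cmul (Cmul (N (S i) 0%nat) (beta n N w)) (RtoC (/ a))).
           { match type of E with Csub ?X ?Y = C0 => transitivity (Cadd (Csub X Y) Y); [ring|] end.
             rewrite E; ring. }
           rewrite E'. ring.
Qed.

Lemma bil_sub n A B e f : bil n (fun i k => Csub (A i k) (B i k)) e f = Csub (bil n A e f) (bil n B e f).
Proof. unfold bil. rewrite <- sumC_sub. apply sumC_ext; intros. rewrite <- sumC_sub.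
  apply sumC_ext; intros; ring. Qed.

Lemma bil_diag n c e f : bil n (fun i k => if Nat.eqb i k then c else C0) e f = Cmul c (ip n e f).
Proof. unfold bil, ip. rewrite <- sumC_scal_l. apply sumC_ext; intros i Hi.
  rewrite <- (sumC_delta n i (fun k => Cmul c (Cmul (Cconj (e i)) (f k)))) by auto.
  apply sumC_ext; intros k Hk. rewrite Nat.eqb_sym. destruct (Nat.eqb k i); ring. Qed.

Lemma mv_sub_diag n c M v i : (i < n)%nat ->
  mv n (fun i k => Csub (if Nat.eqb i k then c else C0) (M i k)) v i = Csub (Cmul c (v i)) (mv n M v i).
Proof. intros Hi. unfold mv. rewrite <- (sumC_delta n i (fun k => Cmul c (v k))) by auto.
  rewrite <- sumC_sub. apply sumC_ext; intros k Hk. rewrite Nat.eqb_sym.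
  destruct (Nat.eqb k i); ring. Qed.

Lemma nrm_scal n c v : nrm n (fun i => Cmul c (v i)) = Cnorm2 c * nrm n v.
Proof. unfold nrm. rewrite <- sumR_scal_l. apply sumR_ext; intros; apply Cnorm2_mul. Qed.
Lemma mv_scal n M c v i : mv n M (fun k => Cmul c (v k)) i = Cmul c (mv n M v i).
Proof. unfold mv. rewrite <- sumC_scal_l. apply sumC_ext; intros; ring. Qed.

Lemma eigen n M : herm n M -> (0 < n)%nat ->
  exists mu v, nrm n v = 1 /\ forall i, (i < n)%nat -> mv n M v i = Cmul (RtoC mu) (v i).
Proof.
  intros HM Hn.
  set (E := fun r => exists v, 0 < nrm n v /\ r = Re (bil n M v v) / nrm n v).
  set (Bm := sumR n (fun j => sumR n (fun j' => (Cnorm2 (M j j') + 1) / 2))).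
  assert (Hb : bound E).
  { exists Bm. intros r [v [Hv ->]]. pose proof (Re_bil_scal_bound n M v). fold Bm in H.
    apply (Rmult_le_reg_r (nrm n v)); auto. unfold Rdiv. rewrite Rmult_assoc, Rinv_l; lra. }
  assert (Hne : exists r, E r).
  { exists (Re (bil n M (ek 0) (ek 0)) / nrm n (ek 0)). exists (ek 0%nat). split; auto.
    rewrite nrm_ek; auto; lra. }
  destruct (completeness E Hb Hne) as [mu [Hub Hlub]].
  set (N := fun i k => Csub (if Nat.eqb i k then RtoC mu else C0) (M i k)).
  assert (HN : herm n N).
  { intros i k Hi Hk. unfold N. rewrite Cconj_sub, (HM i k) by auto. rewrite Nat.eqb_sym.
    destruct (Nat.eqb i k); [rewrite Cconj_RtoC|rewrite Cconj_C0]; auto. }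
  assert (HbN : forall v, bil n N v v = Csub (Cmul (RtoC mu) (RtoC (nrm n v))) (bil n M v v)).
  { intros v. unfold N. rewrite bil_sub, bil_diag, ip_self. auto. }
  assert (Hup : forall v, Re (bil n M v v) <= mu * nrm n v).
  { intros v. destruct (Rle_lt_dec (nrm n v) 0) as [h|h].
    - assert (nrm n v = 0) by (pose proof (nrm_nonneg n v); lra).
      rewrite bil_nrm0 by auto. rewrite H. simpl; lra.
    - assert (Re (bil n M v v) / nrm n v <= mu) by (apply Hub; exists v; auto).
      apply (Rmult_le_compat_r (nrm n v)) in H; [|lra]. unfold Rdiv in H.
      rewrite Rmult_assoc, Rinv_l in H; lra. }
  assert (Hpsd : forall v, 0 <= Re (bil n N v v)).
  { intros v. rewrite HbN. simpl. specialize (Hup v). lra. }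
  destruct (KL n N HN Hpsd) as [[c [Hc Hcv]] | [v [Hv Hker]]].
  - exfalso. assert (mu <= mu - c).
    { apply Hlub. intros r [v [Hv ->]]. specialize (Hcv v). rewrite HbN in Hcv. simpl in Hcv.
      apply (Rmult_le_reg_r (nrm n v)); auto. unfold Rdiv. rewrite Rmult_assoc, Rinv_l; lra. }
    lra.
  - set (s := sqrt (nrm n v)).
    assert (Hs : 0 < s) by (apply sqrt_lt_R0; auto).
    exists mu, (fun i => Cmul (RtoC (/ s)) (v i)). split.
    + rewrite nrm_scal, Cnorm2_RtoC. unfold s.
      assert (Hs' : sqrt (nrm n v) <> 0) by (apply Rgt_not_eq; apply sqrt_lt_R0; auto).
      assert (Hv' : nrm n v <> 0) by (apply Rgt_not_eq; auto).
      replace (/ sqrt (nrm n v) * / sqrt (nrm n v)) with (/ (sqrt (nrm n v) * sqrt (nrm n v))) by (field; auto).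
      rewrite sqrt_sqrt by lra. field; auto.
    + intros i Hi. rewrite mv_scal. specialize (Hker i Hi). unfold N in Hker.
      rewrite mv_sub_diag in Hker by auto.
      assert (mv n M v i = Cmul (RtoC mu) (v i)).
      { match type of Hker with Csub ?X ?Y = C0 => transitivity (Csub X (Csub X Y)); [ring|] end.
        rewrite Hker; ring. }
      rewrite H; ring.
Qed.

Definition dlt (i k : nat) := if Nat.eqb i k then Cone else C0.

Lemma sum_dl n i f : (i < n)%nat -> sumC n (fun k => Cmul (dlt i k) (f k)) = f i.
Proof. intros H. rewrite <- (sumC_delta n i f H). apply sumC_ext; intros k Hk. unfold dlt.
  rewrite Nat.eqb_sym. destruct (Nat.eqb k i); ring. Qed.
Lemma sum_dr n j f : (j < n)%nat -> sumC n (fun k => Cmul (f k) (dlt k j)) = f j.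
Proof. intros H. rewrite <- (sumC_delta n j f H). apply sumC_ext; intros k Hk. unfold dlt.
  destruct (Nat.eqb k j); ring. Qed.
Lemma dlt_conj i k : Cconj (dlt i k) = dlt k i.
Proof. unfold dlt. rewrite Nat.eqb_sym. destruct (Nat.eqb k i); Csimpl; ring. Qed.
Lemma dlt_RtoC i k : (if Nat.eqb i k then RtoC 1 else C0) = dlt i k.
Proof. reflexivity. Qed.

Lemma unitary_iff n U : unitary n U <-> forall i j, (i<n)%nat -> (j<n)%nat ->
  sumC n (fun k => Cmul (Cconj (U k i)) (U k j)) = dlt i j.
Proof. unfold unitary; split; intros H; exact H. Qed.

Lemma extend_unit n v : nrm (S n) v = 1 ->
  exists Q, unitary (S n) Q /\ cunitary (S n) Q /\ forall i, (i < S n)%nat -> Q i 0%nat = v i.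
Proof.
  intros Hv. set (m := S n).
  set (r := sqrt (Cnorm2 (v 0%nat))).
  assert (Hr2 : r * r = Cnorm2 (v 0%nat)) by (apply sqrt_sqrt, Cnorm2_nonneg).
  assert (Hr0 : 0 <= r) by apply sqrt_pos.
  set (om := if Req_EM_T r 0 then Cone else Cmul (v 0%nat) (RtoC (/ r))).
  assert (F1 : Cnorm2 om = 1).
  { unfold om. destruct Req_EM_T. unfold Cnorm2; simpl; ring.
    rewrite Cnorm2_mul, Cnorm2_RtoC, <- Hr2. field; auto. }
  assert (F2 : Cmul (Cconj om) (v 0%nat) = RtoC r).
  { unfold om. destruct Req_EM_T as [e|e].
    - assert (v 0%nat = C0). { apply Cnorm2_zero. rewrite <- Hr2, e. ring. }
      rewrite H, e. Csimpl; ring.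
    - rewrite Cconj_mul, Cconj_RtoC. transitivity (Cmul (RtoC (Cnorm2 (v 0%nat))) (RtoC (/ r))).
      rewrite <- Cmul_conj_l; ring. rewrite <- RtoC_mul, <- Hr2. f_equal. field; auto. }
  set (x := fun i => if Nat.eqb i 0 then om else C0).
  set (w := fun i => Csub (x i) (v i)).
  set (c := nrm m w).
  assert (Hxv : ip m x v = RtoC r).
  { unfold ip, x. rewrite <- F2. rewrite <- (sumC_delta m 0 (fun i => Cmul (Cconj om) (v i))) by (unfold m; lia).
    apply sumC_ext; intros. destruct (Nat.eqb i 0); [auto|]. Csimpl; ring. }
  assert (Hxx : ip m x x = Cone).
  { transitivity (Cmul (Cconj om) om). 2: rewrite Cmul_conj_l, F1; auto.
    unfold ip, x. rewrite <- (sumC_delta m 0 (fun i => Cmul (Cconj om) om)) by (unfold m; lia).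
    apply sumC_ext; intros. destruct (Nat.eqb i 0); [auto|]. Csimpl; ring. }
  assert (Hvx : ip m v x = RtoC r) by (rewrite <- ip_conj, Hxv, Cconj_RtoC; auto).
  assert (Hvv : ip m v v = Cone) by (rewrite ip_self; fold m in Hv; rewrite Hv; auto).
  assert (Hc : c = 2 - 2 * r).
  { unfold c. rewrite nrm_Re. unfold w. rewrite ip_sub_l, !ip_sub_r, Hxv, Hxx, Hvx, Hvv. simpl. ring. }
  set (kap := RtoC (2 / c)).
  set (H := fun i k => Csub (dlt i k) (Cmul kap (Cmul (w i) (Cconj (w k))))).
  set (d := fun k => if Nat.eqb k 0 then om else Cone).
  assert (Hd : forall k, Cmul (Cconj (d k)) (d k) = Cone).
  { intros k. unfold d. destruct (Nat.eqb k 0). rewrite Cmul_conj_l, F1; auto. Csimpl; ring. }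
  assert (HH : forall i k, Cconj (H k i) = H i k).
  { intros i k. unfold H. rewrite Cconj_sub, dlt_conj, !Cconj_mul, Cconj_conj. unfold kap. rewrite Cconj_RtoC. ring. }
  assert (HHH : forall i j, (i < m)%nat -> (j < m)%nat -> sumC m (fun k => Cmul (H i k) (H k j)) = dlt i j).
  { intros i j Hi Hj. unfold H.
    rewrite (sumC_ext m _ (fun k => Cadd (Csub (Cmul (dlt i k) (dlt k j))
         (Cadd (Cmul (dlt i k) (Cmul kap (Cmul (w k) (Cconj (w j)))))
               (Cmul (Cmul kap (Cmul (w i) (Cconj (w k)))) (dlt k j))))
         (Cmul (Cmul (Cmul kap kap) (Cmul (w i) (Cconj (w j)))) (Cmul (Cconj (w k)) (w k))))).
    2:{ intros; ring. }
    rewrite sumC_add, sumC_sub, sumC_add, sumC_scal_l.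
    rewrite (sum_dl m i (fun k => dlt k j)) by auto.
    rewrite (sum_dl m i (fun k => Cmul kap (Cmul (w k) (Cconj (w j))))) by auto.
    rewrite (sum_dr m j (fun k => Cmul kap (Cmul (w i) (Cconj (w k))))) by auto.
    change (sumC m (fun k => Cmul (Cconj (w k)) (w k))) with (ip m w w). rewrite ip_self. fold c.
    destruct (Req_EM_T c 0) as [e|e].
    - assert (Hw : forall k, (k < m)%nat -> w k = C0) by (apply nrm_zero_inv; auto).
      rewrite (Hw i), e by auto. ring.
    - unfold kap. clearbody c. Csimpl; field; auto. }
  exists (fun i k => Cmul (H i k) (d k)). split; [|split].
  - apply unitary_iff. intros i j Hi Hj.
    rewrite (sumC_ext m _ (fun k => Cmul (Cmul (Cconj (d i)) (d j)) (Cmul (H i k) (H k j)))).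
    2:{ intros k Hk. rewrite Cconj_mul, HH. ring. }
    rewrite sumC_scal_l, HHH by auto. unfold dlt. destruct (Nat.eqb_spec i j).
    subst; rewrite Hd; ring. ring.
  - intros i j Hi Hj. change (if Nat.eqb i j then RtoC 1 else C0) with (dlt i j).
    rewrite <- HHH by auto. apply sumC_ext; intros k Hk.
    rewrite Cconj_mul. rewrite (HH k j).
    transitivity (Cmul (Cmul (H i k) (H k j)) (Cmul (Cconj (d k)) (d k))). ring. rewrite Hd; ring.
  - intros i Hi. fold m in Hi. unfold H. destruct (Req_EM_T c 0) as [e|e].
    + assert (Hw : forall k, (k < m)%nat -> w k = C0) by (apply nrm_zero_inv; auto).
      assert (Hxi : v i = x i).
      { pose proof (Hw i Hi). unfold w in H0.
        match type of H0 with Csub ?X ?Y = C0 => transitivity (Csub X (Csub X Y)); [ring|] end.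
        rewrite H0; ring. }
      rewrite Hxi, (Hw i Hi). unfold d, x, dlt. simpl. destruct (Nat.eqb i 0); Csimpl; ring.
    + assert (Hw0 : Cmul (Cconj (w 0%nat)) om = RtoC (1 - r)).
      { unfold w. rewrite Cconj_sub. unfold x; simpl.
        transitivity (Csub (Cmul (Cconj om) om) (Cconj (Cmul (Cconj om) (v 0%nat)))).
        rewrite Cconj_mul, Cconj_conj; ring. rewrite F2, Cmul_conj_l, F1, Cconj_RtoC. Csimpl; ring. }
      assert (Hk : Cmul kap (RtoC (1 - r)) = Cone).
      { unfold kap. rewrite <- RtoC_mul. rewrite Hc. Csimpl; [|ring]. rewrite Hc in e. field.
        intro; apply e; lra. }
      unfold d; simpl.
      transitivity (Csub (Cmul (dlt i 0) om) (Cmul (Cmul kap (Cmul (Cconj (w 0%nat)) om)) (w i))). ring.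
      rewrite Hw0, Hk. unfold w, x, dlt. destruct (Nat.eqb i 0); ring.
Qed.

Definition mm n (A B : nat -> nat -> Cpx) := fun i k => sumC n (fun a => Cmul (A i a) (B a k)).

Lemma cunitary_iff n U : cunitary n U <-> forall i j, (i<n)%nat -> (j<n)%nat ->
  sumC n (fun k => Cmul (U i k) (Cconj (U j k))) = dlt i j.
Proof. unfold cunitary; split; intros H; exact H. Qed.

Lemma unitary_mm n A B : unitary n A -> unitary n B -> unitary n (mm n A B).
Proof.
  rewrite !unitary_iff. intros HA HB i j Hi Hj. unfold mm.
  rewrite (sumC_ext n _ (fun k => sumC n (fun a => sumC n (fun b =>
     Cmul (Cmul (Cconj (B a i)) (B b j)) (Cmul (Cconj (A k a)) (A k b)))))).
  2:{ intros k Hk. rewrite sumC_conj, sumC_mul. apply sumC_ext; intros; apply sumC_ext; intros.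
      rewrite Cconj_mul; ring. }
  rewrite sumC_swap.
  rewrite (sumC_ext n _ (fun a => Cmul (Cconj (B a i)) (B a j))).
  - apply HB; auto.
  - intros a Ha. rewrite sumC_swap.
    rewrite (sumC_ext n _ (fun b => Cmul (dlt a b) (Cmul (Cconj (B a i)) (B b j)))).
    + rewrite (sum_dl n a (fun b => Cmul (Cconj (B a i)) (B b j))); auto.
    + intros b Hb. rewrite sumC_scal_l, HA; auto. ring.
Qed.

Lemma cunitary_mm n A B : cunitary n A -> cunitary n B -> cunitary n (mm n A B).
Proof.
  rewrite !cunitary_iff. intros HA HB i j Hi Hj. unfold mm.
  rewrite (sumC_ext n _ (fun k => sumC n (fun a => sumC n (fun b =>
     Cmul (Cmul (A i a) (Cconj (A j b))) (Cmul (B a k) (Cconj (B b k))))))).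
  2:{ intros k Hk. rewrite sumC_conj, sumC_mul. apply sumC_ext; intros; apply sumC_ext; intros.
      rewrite Cconj_mul; ring. }
  rewrite sumC_swap.
  rewrite (sumC_ext n _ (fun a => Cmul (A i a) (Cconj (A j a)))).
  - apply HA; auto.
  - intros a Ha. rewrite sumC_swap.
    rewrite (sumC_ext n _ (fun b => Cmul (dlt a b) (Cmul (A i a) (Cconj (A j b))))).
    + rewrite (sum_dl n a (fun b => Cmul (A i a) (Cconj (A j b)))); auto.
    + intros b Hb. rewrite sumC_scal_l, HB; auto. ring.
Qed.

Lemma specform_conj n M Q B V lam : cunitary n Q ->
  (forall a b, (a<n)%nat -> (b<n)%nat -> B a b = bil n M (col Q a) (col Q b)) ->
  specform n B V lam -> specform n M (mm n Q V) lam.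
Proof.
  rewrite cunitary_iff. intros HQ HB HV i k Hi Hk.
  set (Y := fun a b j j' => Cmul (Cmul (Cmul (Q i a) (Cconj (Q j a))) (M j j')) (Cmul (Q j' b) (Cconj (Q k b)))).
  transitivity (sumC n (fun a => sumC n (fun b => sumC n (fun j => sumC n (fun j' => Y a b j j'))))).
  - transitivity (sumC n (fun j => sumC n (fun j' => sumC n (fun a => sumC n (fun b => Y a b j j'))))).
    + rewrite <- (sum_dl n i (fun j => M j k)) by auto.
      apply sumC_ext; intros j Hj. rewrite <- (sum_dr n k (fun j' => Cmul (dlt i j) (M j j'))) by auto.
      apply sumC_ext; intros j' Hj'. rewrite <- (HQ i j), <- (HQ j' k) by auto.
      rewrite <- sumC_scal_r, sumC_mul. apply sumC_ext; intros; apply sumC_ext; intros.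
      unfold Y; ring.
    + rewrite (sumC_ext n _ (fun j => sumC n (fun a => sumC n (fun j' => sumC n (fun b => Y a b j j'))))).
      2:{ intros; apply sumC_swap. }
      rewrite sumC_swap. apply sumC_ext; intros a Ha.
      rewrite (sumC_ext n _ (fun j => sumC n (fun b => sumC n (fun j' => Y a b j j')))).
      2:{ intros; apply sumC_swap. }
      apply sumC_swap.
  - unfold mm. symmetry.
    transitivity (sumC n (fun a => sumC n (fun b => Cmul (Cmul (Q i a) (Cconj (Q k b))) (B a b)))).
    + transitivity (sumC n (fun l => sumC n (fun a => sumC n (fun b =>
         Cmul (Cmul (Q i a) (Cconj (Q k b))) (Cmul (Cmul (V a l) (RtoC (lam l))) (Cconj (V b l))))))).
      * apply sumC_ext; intros l Hl. rewrite sumC_conj, <- sumC_scal_r, sumC_mul.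
        apply sumC_ext; intros. apply sumC_ext; intros.
        rewrite Cconj_mul; ring.
      * rewrite sumC_swap. apply sumC_ext; intros a Ha. rewrite sumC_swap. apply sumC_ext; intros b Hb.
        rewrite sumC_scal_l. rewrite (HV a b) by auto. auto.
    + apply sumC_ext; intros a Ha; apply sumC_ext; intros b Hb. rewrite HB by auto. unfold bil.
      rewrite <- sumC_scal_l. apply sumC_ext; intros j Hj. rewrite <- sumC_scal_l.
      apply sumC_ext; intros j' Hj'. unfold Y, col; ring.
Qed.

Definition blk (U : nat -> nat -> Cpx) := fun a k =>
  match a, k with O, O => Cone | O, S _ => C0 | S _, O => C0 | S a', S k' => U a' k' end.
Definition lblk (mu : R) (lam : nat -> R) := fun l => match l with O => mu | S l' => lam l' end.

Lemma unitary_blk n U : unitary n U -> unitary (S n) (blk U).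
Proof.
  rewrite !unitary_iff. intros HU i j Hi Hj. rewrite sumC_first.
  destruct i as [|i], j as [|j]; simpl blk.
  - rewrite sumC_zero'; [Csimpl; ring|]. intros; Csimpl; ring.
  - rewrite sumC_zero'; [unfold dlt; simpl; Csimpl; ring|]. intros; Csimpl; ring.
  - rewrite sumC_zero'; [unfold dlt; simpl; Csimpl; ring|]. intros; Csimpl; ring.
  - rewrite HU by lia. unfold dlt; simpl. Csimpl; ring.
Qed.
Lemma cunitary_blk n U : cunitary n U -> cunitary (S n) (blk U).
Proof.
  rewrite !cunitary_iff. intros HU i j Hi Hj. rewrite sumC_first.
  destruct i as [|i], j as [|j]; simpl blk.
  - rewrite sumC_zero'; [Csimpl; ring|]. intros; Csimpl; ring.
  - rewrite sumC_zero'; [unfold dlt; simpl; Csimpl; ring|]. intros; Csimpl; ring.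
  - rewrite sumC_zero'; [unfold dlt; simpl; Csimpl; ring|]. intros; Csimpl; ring.
  - rewrite HU by lia. unfold dlt; simpl. Csimpl; ring.
Qed.

Lemma specform_blk n B U lam mu :
  B 0%nat 0%nat = RtoC mu ->
  (forall k, (k < n)%nat -> B 0%nat (S k) = C0) ->
  (forall k, (k < n)%nat -> B (S k) 0%nat = C0) ->
  specform n (fun i k => B (S i) (S k)) U lam ->
  specform (S n) B (blk U) (lblk mu lam).
Proof.
  intros H00 H0S HS0 HU i k Hi Hk. rewrite sumC_first.
  destruct i as [|i], k as [|k]; simpl blk; simpl lblk.
  - rewrite sumC_zero'. rewrite H00; Csimpl; ring. intros; Csimpl; ring.
  - rewrite sumC_zero'. rewrite H0S by lia; Csimpl; ring. intros; Csimpl; ring.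
  - rewrite sumC_zero'. rewrite HS0 by lia; Csimpl; ring. intros; Csimpl; ring.
  - rewrite (HU i k) by lia. Csimpl; ring.
Qed.

Lemma mv_ext n M v v' i : (forall k, (k<n)%nat -> v k = v' k) -> mv n M v i = mv n M v' i.
Proof. intros H; unfold mv; apply sumC_ext; intros; rewrite H; auto. Qed.

Theorem spectral n : forall M, herm n M -> exists U lam, unitary n U /\ cunitary n U /\ specform n M U lam.
Proof.
  induction n; intros M HM.
  - exists (fun _ _ => C0), (fun _ => 0). unfold unitary, cunitary, specform. repeat split; intros; lia.
  - destruct (eigen (S n) M HM ltac:(lia)) as [mu [v [Hv Hmv]]].
    destruct (extend_unit n v Hv) as [Q [HQu [HQc HQ0]]].
    set (B := fun a b => bil (S n) M (col Q a) (col Q b)).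
    assert (HBh : herm (S n) B).
    { intros a b Ha Hb. unfold B. rewrite bil_herm; auto. }
    assert (HB0 : forall a, (a < S n)%nat -> B a 0%nat = Cmul (RtoC mu) (dlt a 0)).
    { intros a Ha. unfold B. rewrite bil_ip_mv.
      rewrite (ip_ext (S n) (col Q a) (col Q a) _ (fun j => Cmul (RtoC mu) (col Q 0%nat j))).
      - rewrite ip_scal_r. f_equal. apply (proj1 (unitary_iff _ _) HQu); lia.
      - auto.
      - intros j Hj. rewrite (mv_ext (S n) M (col Q 0%nat) v). rewrite Hmv by auto. unfold col; rewrite HQ0; auto.
        intros; unfold col; apply HQ0; auto. }
    assert (HM' : herm n (fun i k => B (S i) (S k))).
    { intros i k Hi Hk. apply HBh; lia. }
    destruct (IHn _ HM') as [U' [lam' [HU'u [HU'c HU's]]]].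
    exists (mm (S n) Q (blk U')), (lblk mu lam'). split; [|split].
    + apply unitary_mm; auto. apply unitary_blk; auto.
    + apply cunitary_mm; auto. apply cunitary_blk; auto.
    + apply (specform_conj (S n) M Q B); auto.
      apply specform_blk; auto.
      * rewrite HB0 by lia. unfold dlt; simpl. Csimpl; ring.
      * intros k Hk. rewrite (HBh (S k) 0%nat) by lia. rewrite HB0 by lia. unfold dlt; simpl. Csimpl; ring.
      * intros k Hk. rewrite HB0 by lia. unfold dlt; simpl. Csimpl; ring.
Qed.

Definition phi (x : R) := if Rle_dec x 0 then 0 else x * ln x.

Lemma ln_le_sub1 z : 0 < z -> ln z <= z - 1.
Proof. intros H. pose proof (exp_ineq1_le (ln z)). rewrite exp_ln in H0; lra. Qed.

Lemma ln_le x y : 0 < x -> x <= y -> ln x <= ln y.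
Proof. intros H1 H2. destruct H2 as [h|h]. left; apply ln_increasing; auto. subst; lra. Qed.

Lemma ln_nonpos x : 0 < x -> x <= 1 -> ln x <= 0.
Proof. intros; rewrite <- ln_1; apply ln_le; auto. Qed.

Lemma phi_nonpos x : x <= 1 -> phi x <= 0.
Proof. intros H. unfold phi. destruct Rle_dec. lra. apply Rnot_le_lt in n.
  pose proof (ln_nonpos x n H). nra. Qed.

Lemma phi_tangent x0 y : 0 < x0 -> 0 <= y -> y * ln x0 + y - x0 <= phi y.
Proof.
  intros H0 Hy. unfold phi. destruct Rle_dec.
  - assert (y = 0) by lra. subst. lra.
  - apply Rnot_le_lt in n.
    pose proof (ln_le_sub1 (x0 / y)). assert (0 < x0 / y) by (apply Rdiv_lt_0_compat; lra).
    specialize (H H1). unfold Rdiv in H. rewrite ln_mult, ln_Rinv in H by (try apply Rinv_0_lt_compat; lra).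
    apply (Rmult_le_compat_l y) in H; [|lra].
    replace (y * (x0 * / y - 1)) with (x0 - y) in H by (field; lra). nra.
Qed.

Lemma jensen L (pi y : nat -> R) :
  (forall l, (l < L)%nat -> 0 <= pi l) -> (forall l, (l < L)%nat -> 0 <= y l) ->
  sumR L pi <= 1 ->
  phi (sumR L (fun l => pi l * y l)) <= sumR L (fun l => pi l * phi (y l)).
Proof.
  intros Hpi Hy Hs. set (x0 := sumR L (fun l => pi l * y l)).
  assert (Hx0 : 0 <= x0) by (apply sumR_nonneg; intros; apply Rmult_le_pos; auto).
  destruct Hx0 as [Hx0|Hx0].
  - assert (sumR L (fun l => pi l * (y l * ln x0 + y l - x0)) <= sumR L (fun l => pi l * phi (y l))).
    { apply sumR_le; intros. apply Rmult_le_compat_l; auto. apply phi_tangent; auto. }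
    assert (E : sumR L (fun l => pi l * (y l * ln x0 + y l - x0)) = x0 * ln x0 + x0 - sumR L pi * x0).
    { rewrite (sumR_ext L _ (fun l => pi l * y l * ln x0 + pi l * y l - pi l * x0)) by (intros; ring).
      rewrite !sumR_minus, !sumR_add, sumR_scal_r, sumR_scal_r. fold x0. ring. }
    unfold phi at 1. destruct Rle_dec. lra. nra.
  - rewrite <- Hx0. unfold phi at 1. destruct Rle_dec; [|lra].
    rewrite sumR_zero'. lra. intros l Hl.
    assert (pi l * y l = 0).
    { apply (sumR_zero_inv L (fun l => pi l * y l)); auto. intros; apply Rmult_le_pos; auto. }
    destruct (Rmult_integral _ _ H) as [h|h]. rewrite h; ring. unfold phi; rewrite h.
    destruct Rle_dec; [ring|lra].
Qed.

Lemma ip_zero_r d u v : (forall i, (i<d)%nat -> v i = C0) -> ip d u v = C0.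
Proof. intros H; unfold ip; apply sumC_zero'; intros; rewrite H by auto; Csimpl; ring. Qed.

Lemma bistoch d A B (v u : nat -> nat -> Cpx) :
  (forall a b, (a < A)%nat -> (b < A)%nat -> a <> b -> ip d (v a) (v b) = C0) ->
  (forall b, (b < B)%nat -> nrm d (u b) <= 1) ->
  (forall a, (a < A)%nat -> sumR B (fun b => Cnorm2 (ip d (u b) (v a))) = nrm d (v a)) ->
  sumR B (fun b => phi (sumR A (fun a => Cnorm2 (ip d (u b) (v a)))))
    <= sumR A (fun a => phi (nrm d (v a))).
Proof.
  intros Horth Hu Hpars.
  set (D := fun b a => bcoef d (v a) (u b)).
  assert (HC : forall a b, Cnorm2 (ip d (u b) (v a)) = Cnorm2 (ip d (v a) (u b))).
  { intros; rewrite <- ip_conj, Cnorm2_conj; auto. }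
  assert (E1 : forall b, sumR A (fun a => Cnorm2 (ip d (u b) (v a))) = sumR A (fun a => D b a * nrm d (v a))).
  { intros b. apply sumR_ext; intros a Ha. unfold D, bcoef. destruct Rle_dec.
    - assert (nrm d (v a) = 0) by (pose proof (nrm_nonneg d (v a)); lra).
      rewrite ip_zero_r. unfold Cnorm2; simpl; ring. apply nrm_zero_inv; auto.
    - apply Rnot_le_lt in n. rewrite HC. field. lra. }
  apply (Rle_trans _ (sumR B (fun b => sumR A (fun a => D b a * phi (nrm d (v a)))))).
  - apply sumR_le; intros b Hb. rewrite E1. apply jensen.
    + intros; apply bcoef_nonneg.
    + intros; apply nrm_nonneg.
    + eapply Rle_trans; [apply bessel; auto|]. apply Hu; auto.
  - rewrite sumR_swap. right. apply sumR_ext; intros a Ha.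
    rewrite sumR_scal_r. unfold D, bcoef. destruct Rle_dec.
    + assert (nrm d (v a) = 0) by (pose proof (nrm_nonneg d (v a)); lra).
      rewrite H. unfold phi. destruct Rle_dec; [ring|lra].
    + apply Rnot_le_lt in n.
      rewrite (sumR_ext B _ (fun b => Cnorm2 (ip d (u b) (v a)) * / nrm d (v a))).
      rewrite sumR_scal_r, Hpars by auto. field_simplify; [ring|lra].
      intros; rewrite HC; auto.
Qed.

Lemma ip_sumvec n L u (c : nat -> Cpx) (w : nat -> nat -> Cpx) :
  ip n u (fun i => sumC L (fun l => Cmul (c l) (w l i))) = sumC L (fun l => Cmul (c l) (ip n u (w l))).
Proof. unfold ip. rewrite (sumC_ext n _ (fun i => sumC L (fun l => Cmul (c l) (Cmul (Cconj (u i)) (w l i))))).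
  rewrite sumC_swap. apply sumC_ext; intros; rewrite <- sumC_scal_l; auto.
  intros; rewrite <- sumC_scal_l; apply sumC_ext; intros; ring. Qed.

Lemma resid n L (w : nat -> nat -> Cpx) x :
  (forall a b, (a < L)%nat -> (b < L)%nat -> ip n (w a) (w b) = dlt a b) ->
  nrm n (fun i => Csub (x i) (sumC L (fun l => Cmul (ip n (w l) x) (w l i))))
  = nrm n x - sumR L (fun l => Cnorm2 (ip n (w l) x)).
Proof.
  induction L; intros Hw.
  - simpl. rewrite Rminus_0_r. apply nrm_ext; intros; Csimpl; ring.
  - simpl. set (r := fun i => Csub (x i) (sumC L (fun l => Cmul (ip n (w l) x) (w l i)))).
    set (c := ip n (w L) x).
    assert (E : nrm n (fun i => Csub (x i) (Cadd (sumC L (fun l => Cmul (ip n (w l) x) (w l i))) (Cmul c (w L i))))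
               = nrm n (fun i => Csub (r i) (Cmul c (w L i)))).
    { apply nrm_ext; intros; unfold r; ring. }
    rewrite E.
    assert (Hc : ip n (w L) r = c).
    { unfold r. rewrite ip_sub_r, ip_sumvec. rewrite sumC_zero'. fold c. ring.
      intros l Hl. rewrite Hw by lia. unfold dlt. destruct (Nat.eqb_spec L l); [lia|]. Csimpl; ring. }
    assert (Hww : ip n (w L) (w L) = Cone) by (rewrite Hw by lia; unfold dlt; rewrite Nat.eqb_refl; auto).
    rewrite nrm_Re. rewrite ip_sub_l, !ip_sub_r, !ip_scal_l, !ip_scal_r. rewrite <- (ip_conj n (w L) r).
    rewrite Hc, Hww, ip_self. unfold r. rewrite IHL by (intros; apply Hw; lia).
    unfold Cnorm2; simpl. ring.
Qed.

Definition rho dA dB (v : bivec) := fun i k => Cmul (ptraceB dA dB v i k) (RtoC (/ norm2 dA dB v)).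
Definition amp dA (W : nat -> nat -> Cpx) (v : bivec) l := fun j => sumC dA (fun i => Cmul (Cconj (W i l)) (v i j)).
Definition BG dA (v : bivec) := fun j j' => sumC dA (fun i => Cmul (Cconj (v i j)) (v i j')).

Lemma herm_rho dA dB v : herm dA (rho dA dB v).
Proof. intros i k Hi Hk. unfold rho, ptraceB. rewrite Cconj_mul, Cconj_RtoC, sumC_conj. f_equal.
  apply sumC_ext; intros. rewrite Cconj_mul, Cconj_conj; ring. Qed.

Lemma spectrum_ok n M : herm n M -> exists U, unitary n U /\ specform n M U (spectrum n M).
Proof.
  intros H. unfold spectrum.
  assert (Hex : exists lam, is_spectrum n M lam).
  { destruct (spectral n M H) as [U [lam [HU [_ HS]]]]. exists lam, U; split; auto. }
  pose proof (epsilon_spec (inhabits (fun _ : nat => 0)) (fun lam => is_spectrum n M lam) Hex) as [U [HU HS]].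
  exists U; split; auto.
Qed.

Lemma norm2_swap dA dB v : norm2 dA dB v = sumR dB (fun j => nrm dA (fun i => v i j)).
Proof. unfold norm2, nrm. apply sumR_swap. Qed.

Section Schmidt.
Variables (dA dB : nat) (v : bivec) (W : nat -> nat -> Cpx) (r : nat -> R).
Hypothesis Hk : 0 < norm2 dA dB v.
Hypothesis HW : unitary dA W.
Hypothesis HS : specform dA (rho dA dB v) W r.

Lemma schmidt_ip l l' : (l < dA)%nat -> (l' < dA)%nat ->
  ip dB (amp dA W v l) (amp dA W v l') = if Nat.eqb l l' then RtoC (norm2 dA dB v * r l) else C0.
Proof.
  intros Hl Hl'.
  transitivity (Cmul (RtoC (norm2 dA dB v)) (bil dA (rho dA dB v) (col W l') (col W l))).
  - unfold ip, amp, bil, rho, ptraceB, col.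
    rewrite (sumC_ext dB _ (fun j => sumC dA (fun b => sumC dA (fun a =>
        Cmul (Cmul (Cconj (W b l')) (Cmul (v b j) (Cconj (v a j)))) (W a l))))).
    2:{ intros j Hj. rewrite sumC_conj, sumC_mul, sumC_swap. apply sumC_ext; intros; apply sumC_ext; intros.
        rewrite Cconj_mul, Cconj_conj; ring. }
    rewrite <- sumC_scal_l. rewrite sumC_swap. apply sumC_ext; intros b Hb.
    rewrite sumC_swap. rewrite <- sumC_scal_l. apply sumC_ext; intros a Ha.
    repeat rewrite <- sumC_scal_r. repeat rewrite <- sumC_scal_l.
    apply sumC_ext; intros j Hj. assert (norm2 dA dB v <> 0) by lra.
    Csimpl; field; auto.
  - rewrite (bil_spec dA (rho dA dB v) W r) by auto. rewrite Nat.eqb_sym. destruct (Nat.eqb_spec l l').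
    subst. rewrite <- RtoC_mul; auto. Csimpl; ring.
Qed.

Lemma schmidt_nrm l : (l < dA)%nat -> nrm dB (amp dA W v l) = norm2 dA dB v * r l.
Proof. intros Hl. rewrite nrm_Re, schmidt_ip, Nat.eqb_refl by auto. reflexivity. Qed.

Lemma schmidt_r_nonneg l : (l < dA)%nat -> 0 <= r l.
Proof. intros Hl. pose proof (nrm_nonneg dB (amp dA W v l)). rewrite schmidt_nrm in H by auto.
  apply (Rmult_le_reg_l (norm2 dA dB v)); auto. lra. Qed.

Lemma schmidt_sum_r : sumR dA r = 1.
Proof.
  assert (E : sumR dA (fun i => Re (rho dA dB v i i)) = 1).
  { unfold rho, ptraceB. rewrite (sumR_ext dA _ (fun i => sumR dB (fun j => Cnorm2 (v i j)) * / norm2 dA dB v)).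
    rewrite sumR_scal_r. fold (norm2 dA dB v). field. lra.
    intros i Hi. simpl Re. rewrite Re_sumC, Im_sumC.
    rewrite (sumR_ext dB (fun j => Re (Cmul (v i j) (Cconj (v i j)))) (fun j => Cnorm2 (v i j))).
    rewrite (sumR_zero' dB (fun j => Im (Cmul (v i j) (Cconj (v i j))))). ring.
    intros; rewrite Cmul_conj_r; auto. intros; rewrite Cmul_conj_r; auto. }
  rewrite <- E. symmetry.
  rewrite (sumR_ext dA _ (fun i => sumR dA (fun l => Cnorm2 (W i l) * r l))).
  - rewrite sumR_swap. apply sumR_ext; intros l Hl. rewrite sumR_scal_r.
    pose proof (HW l l Hl Hl) as E1. rewrite Nat.eqb_refl in E1. apply (f_equal Re) in E1.
    rewrite Re_sumC in E1. change (Re (RtoC 1)) with 1 in E1.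
    rewrite (sumR_ext dA (fun i => Cnorm2 (W i l)) (fun i => Re (Cmul (Cconj (W i l)) (W i l)))).
    rewrite E1; ring. intros; rewrite Cmul_conj_l; auto.
  - intros i Hi. rewrite HS by auto. rewrite Re_sumC. apply sumR_ext; intros l Hl.
    simpl. unfold Cnorm2. ring.
Qed.

Lemma schmidt_decomp i j : (i < dA)%nat -> (j < dB)%nat ->
  v i j = sumC dA (fun l => Cmul (W i l) (amp dA W v l j)).
Proof.
  intros Hi Hj.
  set (res := fun j i => Csub (v i j) (sumC dA (fun l => Cmul (ip dA (col W l) (fun i => v i j)) (col W l i)))).
  assert (Hres : forall j, nrm dA (res j) = nrm dA (fun i => v i j) - sumR dA (fun l => Cnorm2 (amp dA W v l j))).
  { intros j0. unfold res. rewrite resid. reflexivity. intros a b Ha Hb. apply HW; auto. }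
  assert (Hsum : sumR dB (fun j => nrm dA (res j)) = 0).
  { rewrite (sumR_ext dB _ _ (fun j _ => Hres j)). rewrite sumR_minus, <- norm2_swap.
    rewrite sumR_swap. rewrite (sumR_ext dA _ (fun l => norm2 dA dB v * r l)).
    rewrite sumR_scal_l, schmidt_sum_r. ring.
    intros l Hl. rewrite <- schmidt_nrm by auto. reflexivity. }
  assert (H0 : nrm dA (res j) = 0).
  { apply (sumR_zero_inv dB (fun j => nrm dA (res j))); auto. intros; apply nrm_nonneg. }
  pose proof (nrm_zero_inv dA (res j) H0 i Hi) as E. unfold res, col in E.
  match type of E with Csub ?X ?Y = C0 => transitivity (Cadd (Csub X Y) Y); [ring|] end.
  rewrite E. rewrite (sumC_ext dA _ (fun l => Cmul (W i l) (amp dA W v l j))). ring.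
  intros; unfold amp, ip; ring.
Qed.

Lemma schmidt_BG j j' : (j < dB)%nat -> (j' < dB)%nat ->
  BG dA v j j' = sumC dA (fun l => Cmul (Cconj (amp dA W v l j)) (amp dA W v l j')).
Proof.
  intros Hj Hj'. unfold BG.
  rewrite (sumC_ext dA _ (fun i => sumC dA (fun l => sumC dA (fun l' =>
     Cmul (Cmul (Cconj (amp dA W v l j)) (amp dA W v l' j')) (Cmul (Cconj (W i l)) (W i l')))))).
  2:{ intros i Hi. rewrite !schmidt_decomp by auto. rewrite sumC_conj, sumC_mul.
      apply sumC_ext; intros; apply sumC_ext; intros. rewrite Cconj_mul; ring. }
  rewrite sumC_swap. apply sumC_ext; intros l Hl. rewrite sumC_swap.
  rewrite (sumC_ext dA _ (fun l' => Cmul (dlt l l') (Cmul (Cconj (amp dA W v l j)) (amp dA W v l' j')))).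
  - apply (sum_dl dA l (fun l' => Cmul (Cconj (amp dA W v l j)) (amp dA W v l' j'))); auto.
  - intros l' Hl'. rewrite sumC_scal_l. rewrite (proj1 (unitary_iff _ _) HW) by auto. ring.
Qed.
End Schmidt.

Lemma cs_scalar alpha beta a b t : 0 < t < 1 ->
  Cnorm2 (Cadd (Cmul (Cconj alpha) a) (Cmul (Cconj beta) b))
  <= (Cnorm2 alpha / t + Cnorm2 beta / (1 - t)) * (t * Cnorm2 a + (1 - t) * Cnorm2 b).
Proof.
  intros Ht.
  set (P := Cmul (RtoC (1 - t)) (Cmul (Cconj alpha) (Cconj b))).
  set (Q := Cmul (RtoC t) (Cmul (Cconj beta) (Cconj a))).
  assert (E : t * (1 - t) * ((Cnorm2 alpha / t + Cnorm2 beta / (1 - t)) * (t * Cnorm2 a + (1 - t) * Cnorm2 b)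
             - Cnorm2 (Cadd (Cmul (Cconj alpha) a) (Cmul (Cconj beta) b))) = Cnorm2 (Csub P Q)).
  { unfold P, Q, Cnorm2; simpl. field. lra. }
  pose proof (Cnorm2_nonneg (Csub P Q)).
  assert (0 < t * (1 - t)) by nra.
  set (X := (Cnorm2 alpha / t + Cnorm2 beta / (1 - t)) * (t * Cnorm2 a + (1 - t) * Cnorm2 b)) in *.
  set (Z := Cnorm2 (Cadd (Cmul (Cconj alpha) a) (Cmul (Cconj beta) b))) in *.
  clearbody X Z P Q. nra.
Qed.

Lemma logsum a b s : 0 < a -> 0 < b -> 0 < s < 1 ->
  (a + b) * ln (a + b) <= a * ln (a / s) + b * ln (b / (1 - s)).
Proof.
  intros Ha Hb Hs. set (T := a + b).
  assert (H1 : a - s * T <= a * ln (a / s) - a * ln T).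
  { pose proof (ln_le_sub1 (s * T / a)). assert (0 < s * T / a) by (unfold T; apply Rdiv_lt_0_compat; nra).
    specialize (H H0). unfold Rdiv in *.
    rewrite ln_mult, ln_mult, ln_Rinv in H by (try apply Rinv_0_lt_compat; unfold T; nra).
    rewrite ln_mult, ln_Rinv by (try apply Rinv_0_lt_compat; lra).
    apply (Rmult_le_compat_l a) in H; [|lra].
    replace (a * (s * T * / a - 1)) with (s * T - a) in H by (field; lra). nra. }
  assert (H2 : b - (1 - s) * T <= b * ln (b / (1 - s)) - b * ln T).
  { pose proof (ln_le_sub1 ((1 - s) * T / b)). assert (0 < (1 - s) * T / b) by (unfold T; apply Rdiv_lt_0_compat; nra).
    specialize (H H0). unfold Rdiv in *.
    rewrite ln_mult, ln_mult, ln_Rinv in H by (try apply Rinv_0_lt_compat; unfold T; nra).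
    rewrite ln_mult, ln_Rinv by (try apply Rinv_0_lt_compat; lra).
    apply (Rmult_le_compat_l b) in H; [|lra].
    replace (b * ((1 - s) * T * / b - 1)) with ((1 - s) * T - b) in H by (field; lra). nra. }
  unfold T in *. nra.
Qed.

Lemma concav_scalar a b s : 0 <= a -> 0 <= b -> 0 < s <= 1 -> b <= 1 - s ->
  phi (a + b) <= s * phi (a / s).
Proof.
  intros Ha Hb Hs Hbs.
  destruct Ha as [Ha|Ha]; destruct Hb as [Hb|Hb].
  - assert (s < 1) by lra.
    assert (0 < a / s) by (apply Rdiv_lt_0_compat; lra).
    unfold phi. destruct Rle_dec; [lra|]. destruct Rle_dec; [lra|].
    pose proof (logsum a b s Ha Hb ltac:(lra)).
    assert (b / (1 - s) <= 1).
    { apply (Rmult_le_reg_l (1 - s)); [lra|]. unfold Rdiv. replace ((1 - s) * (b * / (1 - s))) with b by (field; lra). lra. }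
    assert (ln (b / (1 - s)) <= 0) by (apply ln_nonpos; auto; apply Rdiv_lt_0_compat; lra).
    assert (b * ln (b / (1 - s)) <= 0) by nra.
    replace (s * (a / s * ln (a / s))) with (a * ln (a / s)) by (field; lra). lra.
  - subst b. rewrite Rplus_0_r. unfold phi. destruct Rle_dec; [lra|].
    assert (0 < a / s) by (apply Rdiv_lt_0_compat; lra). destruct Rle_dec; [lra|].
    replace (s * (a / s * ln (a / s))) with (a * ln (a / s)) by (field; lra).
    apply Rmult_le_compat_l; [lra|]. apply ln_le; auto.
    apply (Rmult_le_reg_l s); [lra|]. unfold Rdiv. replace (s * (a * / s)) with a by (field; lra). nra.
  - subst a. rewrite Rplus_0_l. unfold Rdiv; rewrite Rmult_0_l.
    replace (phi 0) with 0 by (unfold phi; destruct Rle_dec; lra). rewrite Rmult_0_r.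
    apply phi_nonpos. lra.
  - subst. rewrite Rplus_0_l. unfold Rdiv; rewrite Rmult_0_l. unfold phi. destruct Rle_dec; lra.
Qed.

Lemma xlog2x_phi x : xlog2x x = phi x / ln 2.
Proof. unfold xlog2x, phi, log2. destruct Rle_dec. unfold Rdiv; ring. unfold Rdiv; ring. Qed.

Lemma phi_mul t x : 0 < t -> 0 <= x -> phi (t * x) = x * phi t + t * phi x.
Proof.
  intros Ht Hx. destruct Hx as [Hx|Hx].
  - unfold phi. destruct Rle_dec. nra. destruct Rle_dec; [lra|]. destruct Rle_dec; [lra|].
    rewrite ln_mult by lra. ring.
  - subst. rewrite Rmult_0_r. unfold phi. destruct Rle_dec; [|lra]. destruct Rle_dec; [|lra]. ring.
Qed.

Lemma ip_add_r n u v w : ip n u (fun i => Cadd (v i) (w i)) = Cadd (ip n u v) (ip n u w).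
Proof. unfold ip. rewrite <- sumC_add. apply sumC_ext; intros; ring. Qed.
Lemma ip_conjvec n x y : ip n (fun j => Cconj (x j)) (fun j => Cconj (y j)) = ip n y x.
Proof. unfold ip. apply sumC_ext; intros. rewrite Cconj_conj; ring. Qed.
Lemma nrm_conjvec n x : nrm n (fun j => Cconj (x j)) = nrm n x.
Proof. unfold nrm. apply sumR_ext; intros; apply Cnorm2_conj. Qed.
Lemma herm_BG dA dB v : herm dB (BG dA v).
Proof. intros j j' Hj Hj'. unfold BG. rewrite sumC_conj. apply sumC_ext; intros.
  rewrite Cconj_mul, Cconj_conj; ring. Qed.
Lemma BG_gram dA v j j' : BG dA v j j' =
  sumC dA (fun i => Cmul ((fun i j => Cconj (v i j)) i j) (Cconj ((fun i j => Cconj (v i j)) i j'))).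
Proof. unfold BG. apply sumC_ext; intros. rewrite Cconj_conj; auto. Qed.
Lemma bil_lin n A B a b e : bil n (fun j j' => Cadd (Cmul a (A j j')) (Cmul b (B j j'))) e e =
  Cadd (Cmul a (bil n A e e)) (Cmul b (bil n B e e)).
Proof. unfold bil. rewrite <- !sumC_scal_l, <- sumC_add. apply sumC_ext; intros.
  rewrite <- !sumC_scal_l, <- sumC_add. apply sumC_ext; intros; ring. Qed.
Lemma ip_ek K b x : (b < K)%nat -> ip K (ek b) x = x b.
Proof. intros H. unfold ip. rewrite <- (sumC_delta K b x H). apply sumC_ext; intros.
  unfold ek. destruct (Nat.eqb i b); Csimpl; ring. Qed.
Lemma parseval_std K x : sumR K (fun b => Cnorm2 (ip K (ek b) x)) = nrm K x.
Proof. unfold nrm. apply sumR_ext; intros; rewrite ip_ek; auto. Qed.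
Lemma nrm_col_unit n E b : unitary n E -> (b < n)%nat -> nrm n (col E b) = 1.
Proof. intros H Hb. rewrite nrm_Re. unfold ip, col. rewrite (H b b Hb Hb), Nat.eqb_refl. reflexivity. Qed.

Lemma Rdiv_le_0_compat a b : 0 <= a -> 0 < b -> 0 <= a / b.
Proof. intros; unfold Rdiv; apply Rmult_le_pos; [auto| left; apply Rinv_0_lt_compat; auto]. Qed.

Lemma ip_def n u v : ip n u v = sumC n (fun i => Cmul (Cconj (u i)) (v i)).
Proof. reflexivity. Qed.

Theorem theorem3 (dA dB : nat) (Psi Phi : bivec) (alpha beta : Cpx)
  (hPsi : norm2 dA dB Psi = 1) (hPhi : norm2 dA dB Phi = 1)
  (hab : Cnorm2 alpha + Cnorm2 beta = 1)
  (hGamma : exists i j, (i < dA)%nat /\ (j < dB)%nat /\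
              superpos alpha beta Psi Phi i j <> C0)
  (t : R) (ht : 0 < t < 1) :
  norm2 dA dB (superpos alpha beta Psi Phi)
    * entanglement dA dB (superpos alpha beta Psi Phi)
  <= (t * Cnorm2 beta + (1 - t) * Cnorm2 alpha) / (t * (1 - t))
     * (t * entanglement dA dB Psi + (1 - t) * entanglement dA dB Phi + h2 t).
Proof.
  set (G := superpos alpha beta Psi Phi).
  assert (Hg : 0 < norm2 dA dB G).
  { destruct hGamma as [i [j [Hi [Hj Hne]]]]. unfold norm2.
    apply (sumR_pos dA _ i); auto. intros; apply sumR_nonneg; intros; apply Cnorm2_nonneg.
    apply (sumR_pos dB _ j); auto. intros; apply Cnorm2_nonneg. apply Cnorm2_pos; auto. }
  destruct (spectrum_ok dA (rho dA dB G) (herm_rho dA dB G)) as [W [HW HSW]].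
  destruct (spectrum_ok dA (rho dA dB Psi) (herm_rho dA dB Psi)) as [U [HU HSU]].
  destruct (spectrum_ok dA (rho dA dB Phi) (herm_rho dA dB Phi)) as [V [HV HSV]].
  change (entanglement dA dB G) with (- sumR dA (fun l => xlog2x (spectrum dA (rho dA dB G) l))).
  change (entanglement dA dB Psi) with (- sumR dA (fun l => xlog2x (spectrum dA (rho dA dB Psi) l))).
  change (entanglement dA dB Phi) with (- sumR dA (fun l => xlog2x (spectrum dA (rho dA dB Phi) l))).
  set (r := spectrum dA (rho dA dB G)) in *.
  set (p := spectrum dA (rho dA dB Psi)) in *.
  set (q := spectrum dA (rho dA dB Phi)) in *.
  set (g := norm2 dA dB G) in *.
  assert (HPs : 0 < norm2 dA dB Psi) by lra.
  assert (HPh : 0 < norm2 dA dB Phi) by lra.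
  set (gam := amp dA W G). set (psi := amp dA U Psi). set (ph := amp dA V Phi).
  pose proof (schmidt_sum_r dA dB G W r Hg HW HSW) as Sr.
  pose proof (schmidt_sum_r dA dB Psi U p HPs HU HSU) as Sp.
  pose proof (schmidt_sum_r dA dB Phi V q HPh HV HSV) as Sq.
  pose proof (schmidt_r_nonneg dA dB G W r Hg HW HSW) as Nr.
  pose proof (schmidt_r_nonneg dA dB Psi U p HPs HU HSU) as Np.
  pose proof (schmidt_r_nonneg dA dB Phi V q HPh HV HSV) as Nq.
  set (Y := fun j j' => Cadd (Cmul (RtoC t) (BG dA Psi j j')) (Cmul (RtoC (1 - t)) (BG dA Phi j j'))).
  assert (HY : herm dB Y).
  { intros j j' Hj Hj'. unfold Y. rewrite (herm_BG dA dB Psi), (herm_BG dA dB Phi) by auto.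
    rewrite Cconj_add, !Cconj_mul, !Cconj_RtoC; auto. }
  destruct (spectral dB Y HY) as [E [y [HEu [HEc HEs]]]].
  set (lam := Cnorm2 alpha / t + Cnorm2 beta / (1 - t)).
  assert (Elam : (t * Cnorm2 beta + (1 - t) * Cnorm2 alpha) / (t * (1 - t)) = lam)
    by (unfold lam; field; lra).
  rewrite Elam.
  set (gk := fun k j => if Nat.ltb k dA then Cmul (RtoC (sqrt t)) (Cconj (psi k j))
                        else Cmul (RtoC (sqrt (1 - t))) (Cconj (ph (k - dA)%nat j))).
  set (K := (dA + dA)%nat).
  assert (HYg : forall j j', (j < dB)%nat -> (j' < dB)%nat ->
     Y j j' = sumC K (fun k => Cmul (gk k j) (Cconj (gk k j')))).
  { intros j j' Hj Hj'. unfold K. rewrite sumC_plus. unfold Y.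
    rewrite (schmidt_BG dA dB Psi U p HPs HU HSU) by auto.
    rewrite (schmidt_BG dA dB Phi V q HPh HV HSV) by auto.
    rewrite <- !sumC_scal_l. f_equal; apply sumC_ext; intros k Hk; unfold gk.
    - destruct (Nat.ltb_spec k dA); [|lia].
      rewrite Cconj_mul, Cconj_RtoC, Cconj_conj.
      transitivity (Cmul (Cmul (RtoC (sqrt t)) (RtoC (sqrt t))) (Cmul (Cconj (psi k j)) (psi k j'))).
      rewrite <- RtoC_mul, sqrt_sqrt by lra. auto. ring.
    - destruct (Nat.ltb_spec (dA + k) dA); [lia|]. replace (dA + k - dA)%nat with k by lia.
      rewrite Cconj_mul, Cconj_RtoC, Cconj_conj.
      transitivity (Cmul (Cmul (RtoC (sqrt (1-t))) (RtoC (sqrt (1-t)))) (Cmul (Cconj (ph k j)) (ph k j'))).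
      rewrite <- RtoC_mul, sqrt_sqrt by lra. auto. ring. }
  assert (Hy : forall l, (l < dB)%nat -> y l = sumR K (fun k => Cnorm2 (ip dB (col E l) (gk k)))).
  { intros l Hl. apply RtoC_inj. rewrite <- (bil_gram_diag dB K Y gk) by auto.
    rewrite (bil_spec dB Y E y) by auto. rewrite Nat.eqb_refl; auto. }
  assert (Hgk : forall k, (k < K)%nat -> nrm dB (gk k) = if Nat.ltb k dA then t * p k else (1 - t) * q (k - dA)%nat).
  { intros k Hk. unfold gk. destruct (Nat.ltb_spec k dA).
    - rewrite nrm_scal, Cnorm2_RtoC, sqrt_sqrt, nrm_conjvec by lra. unfold psi.
      rewrite (schmidt_nrm dA dB Psi U p HPs HU HSU) by auto. rewrite hPsi; ring.
    - rewrite nrm_scal, Cnorm2_RtoC, sqrt_sqrt, nrm_conjvec by lra. unfold ph.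
      rewrite (schmidt_nrm dA dB Phi V q HPh HV HSV) by (unfold K in Hk; lia). rewrite hPhi; ring. }
  assert (SgK : sumR K (fun k => nrm dB (gk k)) = 1).
  { rewrite (sumR_ext K _ _ Hgk). unfold K. rewrite sumR_plus.
    rewrite (sumR_ext dA (fun k => if Nat.ltb k dA then t * p k else (1 - t) * q (k - dA)%nat) (fun k => t * p k)).
    rewrite (sumR_ext dA (fun k => if Nat.ltb (dA + k) dA then t * p (dA + k)%nat else (1 - t) * q (dA + k - dA)%nat) (fun k => (1 - t) * q k)).
    rewrite !sumR_scal_l. rewrite Sp, Sq. ring.
    intros k Hk. destruct (Nat.ltb_spec (dA + k) dA); [lia|]. replace (dA + k - dA)%nat with k by lia; auto.
    intros k Hk. destruct (Nat.ltb_spec k dA); [auto|lia]. }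
  assert (Sy : sumR dB y = 1).
  { rewrite (sumR_ext dB _ _ Hy). rewrite sumR_swap. rewrite <- SgK. apply sumR_ext; intros.
    apply parseval; auto. }
  set (c := fun l => sumR dA (fun a => Cnorm2 (ip dB (col E l) (fun j => Cconj (gam a j))))).
  assert (Hc1 : forall l, (l < dB)%nat -> RtoC (c l) = bil dB (BG dA G) (col E l) (col E l)).
  { intros l Hl. symmetry. apply (bil_gram_diag dB dA (BG dA G) (fun a j => Cconj (gam a j))).
    intros j j' Hj Hj'. rewrite (schmidt_BG dA dB G W r Hg HW HSW) by auto.
    apply sumC_ext; intros. rewrite Cconj_conj; auto. }
  assert (Hc2 : forall l, (l < dB)%nat -> c l =
     sumR dA (fun i => Cnorm2 (ip dB (col E l) (fun j => Cconj (G i j))))).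
  { intros l Hl. apply RtoC_inj. rewrite Hc1 by auto.
    apply (bil_gram_diag dB dA (BG dA G) (fun i j => Cconj (G i j))). intros; apply BG_gram. }
  assert (Hy2 : forall l, (l < dB)%nat -> y l =
     t * sumR dA (fun i => Cnorm2 (ip dB (col E l) (fun j => Cconj (Psi i j))))
     + (1 - t) * sumR dA (fun i => Cnorm2 (ip dB (col E l) (fun j => Cconj (Phi i j))))).
  { intros l Hl. apply RtoC_inj. transitivity (bil dB Y (col E l) (col E l)).
    rewrite (bil_spec dB Y E y l l), Nat.eqb_refl by auto; auto.
    unfold Y. rewrite bil_lin.
    rewrite (bil_gram_diag dB dA (BG dA Psi) (fun i j => Cconj (Psi i j))) by (intros; apply BG_gram).
    rewrite (bil_gram_diag dB dA (BG dA Phi) (fun i j => Cconj (Phi i j))) by (intros; apply BG_gram).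
    rewrite RtoC_add, !RtoC_mul. auto. }
  assert (HCS : forall l, (l < dB)%nat -> c l <= lam * y l).
  { intros l Hl. rewrite Hc2, Hy2 by auto.
    rewrite Rmult_plus_distr_l, <- !Rmult_assoc, <- !sumR_scal_l, <- sumR_add.
    apply sumR_le; intros i Hi.
    rewrite (ip_ext dB (col E l) (col E l) _ (fun j => Cadd (Cmul (Cconj alpha) (Cconj (Psi i j))) (Cmul (Cconj beta) (Cconj (Phi i j))))).
    - rewrite ip_add_r, !ip_scal_r. eapply Rle_trans. apply (cs_scalar _ _ _ _ t ht). fold lam. right; ring.
    - auto.
    - intros j Hj. unfold G, superpos. rewrite Cconj_add, !Cconj_mul; auto. }
  assert (Sc : sumR dB c = g).
  { unfold c. rewrite sumR_swap.
    rewrite (sumR_ext dA _ (fun a => g * r a)). rewrite sumR_scal_l, Sr; ring.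
    intros a Ha. rewrite parseval by auto. rewrite nrm_conjvec. unfold gam.
    apply (schmidt_nrm dA dB G W r Hg HW HSW); auto. }
  assert (Hglam : g <= lam).
  { rewrite <- Sc. replace lam with (lam * sumR dB y) by (rewrite Sy; ring).
    rewrite <- sumR_scal_l. apply sumR_le; auto. }
  assert (Hlam : 0 < lam) by lra.
  assert (B1 : sumR K (fun b => phi (nrm dB (gk b))) <= sumR dB (fun l => phi (y l))).
  { pose proof (bistoch K dB K (fun l k => ip dB (col E l) (gk k)) ek) as B.
    rewrite (sumR_ext K _ (fun b => phi (nrm dB (gk b)))) in B.
    rewrite (sumR_ext dB _ (fun l => phi (y l))) in B.
    - apply B.
      + intros a b Ha Hb Hab. rewrite (ip_def K).
        transitivity (bil dB Y (col E b) (col E a)).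
        * rewrite (bil_gram dB K Y gk) by auto. apply sumC_ext; intros k Hk. rewrite ip_conj. ring.
        * rewrite (bil_spec dB Y E y b a) by auto. destruct (Nat.eqb_spec b a); [lia|auto].
      + intros b Hb. rewrite nrm_ek; auto; lra.
      + intros l Hl. apply parseval_std.
    - intros l Hl. unfold nrm. rewrite Hy; auto.
    - intros b Hb. f_equal. rewrite <- (parseval dB E (gk b)) by auto. apply sumR_ext; intros l Hl.
      rewrite ip_ek; auto. }
  set (vv := fun a j => Cmul (RtoC (/ sqrt g)) (Cconj (gam a j))).
  assert (Hsg : Cnorm2 (RtoC (/ sqrt g)) = / g).
  { rewrite Cnorm2_RtoC. rewrite <- Rinv_mult. rewrite sqrt_sqrt; lra. }
  assert (B2 : sumR dB (fun l => phi (c l / g)) <= sumR dA (fun a => phi (r a))).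
  { pose proof (bistoch dB dA dB vv (col E)) as B.
    rewrite (sumR_ext dB _ (fun l => phi (c l / g))) in B.
    rewrite (sumR_ext dA _ (fun a => phi (r a))) in B.
    - apply B.
      + intros a b Ha Hb Hab. unfold vv. rewrite ip_scal_l, ip_scal_r, ip_conjvec. unfold gam.
        rewrite (schmidt_ip dA dB G W r Hg HW HSW) by auto. destruct (Nat.eqb_spec b a); [lia|]. Csimpl; ring.
      + intros b Hb. rewrite nrm_col_unit; auto; lra.
      + intros a Ha. apply parseval; auto.
    - intros a Ha. f_equal. unfold vv. rewrite nrm_scal, Hsg, nrm_conjvec. unfold gam.
      rewrite (schmidt_nrm dA dB G W r Hg HW HSW) by auto. fold g. field. apply Rgt_not_eq; auto.
    - intros l Hl. f_equal. unfold c. unfold Rdiv. rewrite <- sumR_scal_r. apply sumR_ext; intros a Ha.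
      unfold vv. rewrite ip_scal_r, Cnorm2_mul, Hsg. ring. }
  assert (Hcn : forall l, (l < dB)%nat -> 0 <= c l).
  { intros; unfold c; apply sumR_nonneg; intros; apply Cnorm2_nonneg. }
  assert (Hbn : forall l, (l < dB)%nat -> 0 <= y l - c l / lam).
  { intros l Hl. pose proof (HCS l Hl).
    assert (c l / lam <= y l). { apply (Rmult_le_reg_l lam); auto. unfold Rdiv.
      replace (lam * (c l * / lam)) with (c l) by (field; lra). lra. } lra. }
  assert (Sb : sumR dB (fun l => y l - c l / lam) = 1 - g / lam).
  { rewrite sumR_minus. unfold Rdiv. rewrite sumR_scal_r, Sy, Sc. ring. }
  assert (B3 : forall l, (l < dB)%nat -> phi (y l) <= (g / lam) * phi (c l / g)).
  { intros l Hl.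
    pose proof (concav_scalar (c l / lam) (y l - c l / lam) (g / lam)) as C.
    replace (c l / lam + (y l - c l / lam)) with (y l) in C by ring.
    replace (c l / lam / (g / lam)) with (c l / g) in C by (field; split; lra).
    apply C.
    - apply Rdiv_le_0_compat; auto.
    - auto.
    - split. apply Rdiv_lt_0_compat; lra. apply (Rmult_le_reg_l lam); auto.
      replace (lam * (g / lam)) with g by (field; lra). lra.
    - rewrite <- Sb. apply (sumR_term_le dB (fun l => y l - c l / lam)); auto. }
  assert (Hfin : sumR K (fun b => phi (nrm dB (gk b))) <= g / lam * sumR dA (fun a => phi (r a))).
  { eapply Rle_trans. apply B1. eapply Rle_trans. apply sumR_le. apply B3.
    rewrite sumR_scal_l. apply Rmult_le_compat_l. apply Rdiv_le_0_compat; lra. apply B2. }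
  assert (Hn : sumR K (fun b => phi (nrm dB (gk b))) =
     phi t + t * sumR dA (fun a => phi (p a)) + (phi (1 - t) + (1 - t) * sumR dA (fun a => phi (q a)))).
  { rewrite (sumR_ext K _ (fun k => phi (if Nat.ltb k dA then t * p k else (1 - t) * q (k - dA)%nat))).
    2:{ intros; rewrite Hgk; auto. }
    unfold K. rewrite sumR_plus.
    rewrite (sumR_ext dA (fun k => phi (if Nat.ltb k dA then t * p k else (1 - t) * q (k - dA)%nat))
        (fun k => p k * phi t + t * phi (p k))).
    rewrite (sumR_ext dA (fun k => phi (if Nat.ltb (dA + k) dA then t * p (dA + k)%nat else (1 - t) * q (dA + k - dA)%nat))
        (fun k => q k * phi (1 - t) + (1 - t) * phi (q k))).
    rewrite !sumR_add, !sumR_scal_r, !sumR_scal_l. rewrite Sp, Sq. ring.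
    intros k Hk. destruct (Nat.ltb_spec (dA + k) dA); [lia|]. replace (dA + k - dA)%nat with k by lia.
    apply phi_mul; [lra| auto].
    intros k Hk. destruct (Nat.ltb_spec k dA); [|lia]. apply phi_mul; [lra|auto]. }
  rewrite Hn in Hfin.
  unfold h2. rewrite !xlog2x_phi.
  rewrite (sumR_ext dA (fun l => xlog2x (r l)) (fun l => phi (r l) * / ln 2)) by (intros; rewrite xlog2x_phi; auto).
  rewrite (sumR_ext dA (fun l => xlog2x (p l)) (fun l => phi (p l) * / ln 2)) by (intros; rewrite xlog2x_phi; auto).
  rewrite (sumR_ext dA (fun l => xlog2x (q l)) (fun l => phi (q l) * / ln 2)) by (intros; rewrite xlog2x_phi; auto).
  rewrite !sumR_scal_r.
  assert (Hl2 : 0 < ln 2) by (pose proof ln_lt_2; lra).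
  set (Hr := sumR dA (fun a => phi (r a))) in *.
  set (Hp := sumR dA (fun a => phi (p a))) in *.
  set (Hq := sumR dA (fun a => phi (q a))) in *.
  assert (Hfin' : lam * (phi t + t * Hp + (phi (1 - t) + (1 - t) * Hq)) <= g * Hr).
  { apply (Rmult_le_compat_l lam) in Hfin; [|lra].
    replace (lam * (g / lam * Hr)) with (g * Hr) in Hfin by (field; lra). lra. }
  clearbody Hr Hp Hq g lam.
  assert (Efin : lam * (t * - (Hp * / ln 2) + (1 - t) * - (Hq * / ln 2) + (- (phi t / ln 2) - phi (1 - t) / ln 2))
              - g * - (Hr * / ln 2) = (g * Hr - lam * (phi t + t * Hp + (phi (1 - t) + (1 - t) * Hq))) / ln 2).
  { field. lra. }
  assert (0 <= (g * Hr - lam * (phi t + t * Hp + (phi (1 - t) + (1 - t) * Hq))) / ln 2).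
  { apply Rdiv_le_0_compat; lra. }
  lra.
Qed.
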